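(* Let $k\ge 2$ and $\lambda\ge \frac{1}{3k}$, and consider the common-chunk-protocol Markov process. Let $C=108\,e\,k^3$ and define on the state space \[ L(\mathbf{x}) \;=\; C\sum_{i=1}^k \bar S_i \;+\; \sum_{i=1}^k \frac{S}{e^{S_i}} \;+\; \frac{S}{e^{S_0}} . \] Then there exists $\epsilon>0$ such that $\Delta L(\mathbf{x})<-\epsilon$ for every state $\mathbf{x}$ with \[ S \;>\; 4Ck\,\exp\!\Big(3C\lambda k^2 e^{6\lambda k^4}\Big). \]
   Context: Model: Fix an integer $k\ge 2$ (number of chunks of a file) and $\lambda>0$. There is always exactly one seed holding all $k$ chunks. Non-seed peers arrive according to a Poisson process of rate $\lambda$, each arriving with no chunks; each non-seed peer holds a subset (its profile) of $\{1,\dots,k\}$ and leaves the system immediately once it holds all $k$ chunks. The state $\mathbf{x}$ of the continuous-time Markov process is the number of non-seed peers with each profile. $S$ denotes the total number of peers present, including the seed. Each non-seed peer has an independent rate-1 Poisson clock; at each tick it draws a sample of peers independently and uniformly at random with replacement from the current $S$ peers (seed and itself included) and may instantaneously download at most one chunk that it lacks and that is held by some sampled peer (such a chunk is a ''match''). Counting draws with multiplicity, a chunk is ''rare'' in a sample of 3 draws if exactly one of the 3 draws holds it. Common chunk protocol: (i) a peer with no chunks draws 3 peers and downloads a chunk chosen uniformly among the rare matches, if there is any, otherwise nothing; (ii) a peer holding at least 1 and at most $k-2$ chunks draws 1 peer and downloads a uniformly chosen match, if any, otherwise nothing; (iii) a peer holding exactly $k-1$ chunks draws 3 peers and downloads its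 missing chunk only if that chunk is held by some draw and every chunk it holds is held by at least 2 of the 3 draws; otherwise nothing. Notation: $S_i$ ($1\le i\le k$) is the number of peers, including the seed, holding chunk $i$; $S_0$ is the number of peers holding no chunks; $\bar S_i=S-S_i$. For a function $f$ on the state space, with $q(\mathbf{x},\mathbf{x}')$ the transition rates of the Markov process, the drift is $\Delta f(\mathbf{x})=\sum_{\mathbf{x}'\neq\mathbf{x}} q(\mathbf{x},\mathbf{x}')\,(f(\mathbf{x}')-f(\mathbf{x}))$. *)

(* Defs.v *)
From Stdlib Require Import Reals List Arith Bool.
Import ListNotations.
Open Scope R_scope.

(* A profile is a list of k booleans; entry j (0-based, j < k) tells whether
   chunk j+1 is held.  Chunks are indexed 0..k-1 here instead of 1..k. *)
Definition profile := list bool.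

Fixpoint allp (k : nat) : list profile :=
  match k with
  | O => [nil]
  | S n => map (cons true) (allp n) ++ map (cons false) (allp n)
  end.

Definition holds (B : profile) (i : nat) : bool := nth i B false.
Definition nchunks (B : profile) : nat := length (filter (fun b => b) B).
Definition is_full (B : profile) : bool := forallb (fun b => b) B.
Definition empty_prof (k : nat) : profile := repeat false k.

(* A state: number of non-seed peers with each (non-full) profile.
   Values at the full profile (and at lists of length <> k) are ignored. *)
Definition state := profile -> nat.

(* Number of peers (seed included) with profile B: the full profile is held
   exactly by the seed (non-seed peers holding everything leave at once). *)
Definition npeers (x : state) (B : profile) : nat :=
  if is_full B then 1%nat else x B.

Definition sumn_l {A : Type} (f : A -> nat) (l : list A) : nat :=
  fold_right (fun a s => (f a + s)%nat) 0%nat l.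
Definition rsum {A : Type} (f : A -> R) (l : list A) : R :=
  fold_right (fun a s => f a + s) 0 l.

Definition Stot (k : nat) (x : state) : nat := sumn_l (npeers x) (allp k).
Definition Schunk (k : nat) (x : state) (i : nat) : nat :=
  sumn_l (fun B => if holds B i then npeers x B else 0%nat) (allp k).
Definition S0 (k : nat) (x : state) : nat := x (empty_prof k).

Definition Cconst (k : nat) : R := 108 * exp 1 * INR k ^ 3.

Definition Lyap (k : nat) (x : state) : R :=
  Cconst k * rsum (fun i => INR (Stot k x) - INR (Schunk k x i)) (seq 0 k)
  + rsum (fun i => INR (Stot k x) / exp (INR (Schunk k x i))) (seq 0 k)
  + INR (Stot k x) / exp (INR (S0 k x)).

Definition prof_eqb (A B : profile) : bool :=
  if list_eq_dec bool_dec A B then true else false.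
Definition add_peer (x : state) (A : profile) : state :=
  fun B => if prof_eqb B A then (x B + 1)%nat else x B.
Definition rem_peer (x : state) (A : profile) : state :=
  fun B => if prof_eqb B A then (x B - 1)%nat else x B.
Fixpoint set_true (A : profile) (i : nat) : profile :=
  match A, i with
  | nil, _ => nil
  | _ :: A', O => true :: A'
  | b :: A', S i' => b :: set_true A' i'
  end.
Definition move (x : state) (A : profile) (i : nat) : state :=
  let A' := set_true A i in
  if is_full A' then rem_peer x A else add_peer (rem_peer x A) A'.

(* probability that a uniformly drawn peer (with replacement, among all S
   peers, seed and self included) has profile B *)
Definition w (k : nat) (x : state) (B : profile) : R :=
  INR (npeers x B) / INR (Stot k x).

Definition cnt3 (B1 B2 B3 : profile) (j : nat) : nat :=
  ((if holds B1 j then 1 else 0) + (if holds B2 j then 1 else 0)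
   + (if holds B3 j then 1 else 0))%nat.
Definition rare3 (B1 B2 B3 : profile) (j : nat) : bool := Nat.eqb (cnt3 B1 B2 B3 j) 1.
Definition nrare (k : nat) (B1 B2 B3 : profile) : nat :=
  length (filter (rare3 B1 B2 B3) (seq 0 k)).

Definition sum3 (k : nat) (f : profile -> profile -> profile -> R) : R :=
  rsum (fun B1 => rsum (fun B2 => rsum (fun B3 => f B1 B2 B3) (allp k)) (allp k)) (allp k).

(* rule (i): peer with no chunks; draws 3, downloads a uniformly chosen rare match *)
Definition p_empty (k : nat) (x : state) (i : nat) : R :=
  sum3 k (fun B1 B2 B3 => w k x B1 * w k x B2 * w k x B3 *
    (if rare3 B1 B2 B3 i then / INR (nrare k B1 B2 B3) else 0)).

(* rule (ii): 1 <= |A| <= k-2; draws 1, downloads a uniformly chosen match *)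
Definition nmatch (k : nat) (A B : profile) : nat :=
  length (filter (fun j => holds B j && negb (holds A j)) (seq 0 k)).
Definition p_mid (k : nat) (x : state) (A : profile) (i : nat) : R :=
  rsum (fun B => w k x B *
    (if holds B i && negb (holds A i) then / INR (nmatch k A B) else 0)) (allp k).

(* rule (iii): |A| = k-1; draws 3; downloads the missing chunk i iff it is held
   by some draw and every held chunk is held by at least 2 of the 3 draws *)
Definition p_last (k : nat) (x : state) (A : profile) (i : nat) : R :=
  sum3 k (fun B1 B2 B3 => w k x B1 * w k x B2 * w k x B3 *
    (if negb (holds A i) && (holds B1 i || holds B2 i || holds B3 i)
        && forallb (fun j => negb (holds A j) || Nat.leb 2 (cnt3 B1 B2 B3 j)) (seq 0 k)
     then 1 else 0)).

(* probability that a clock tick of a peer with (non-full) profile A results in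
   downloading chunk i *)
Definition p_dl (k : nat) (x : state) (A : profile) (i : nat) : R :=
  let c := nchunks A in
  if Nat.eqb c 0 then p_empty k x i
  else if Nat.leb c (k - 2) then p_mid k x A i
  else p_last k x A i.

(* Drift  Delta f(x) = sum_{x' <> x} q(x,x') (f(x') - f(x)).  The possible
   transitions are: arrival (rate lam) of an empty peer, and, for each non-full
   profile A and chunk i not in A, a peer of profile A downloading i, at rate
   x_A * p_dl(A,i).  These transitions lead to pairwise distinct states x' <> x
   (when their rate is nonzero), so the sum over events equals the sum over x'. *)
Definition drift (k : nat) (lam : R) (f : state -> R) (x : state) : R :=
  lam * (f (add_peer x (empty_prof k)) - f x)
  + rsum (fun A => if is_full A then 0 else
       rsum (fun i => if holds A i then 0 else
               INR (x A) * p_dl k x A i * (f (move x A i) - f x)) (seq 0 k))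
     (allp k).

(* Main.v *)
Require Import Defs.
From Stdlib Require Import Reals List Arith Bool.
Require Import Defs.
From Stdlib Require Import Reals List Arith Bool Lra Lia Psatz Classical.
Import ListNotations.
Open Scope R_scope.

Lemma rsum_app {A} (f:A->R) l1 l2 : rsum f (l1++l2) = rsum f l1 + rsum f l2.
Proof. induction l1; simpl; [lra| rewrite IHl1; lra]. Qed.
Lemma rsum_map {A B} (f:B->R) (g:A->B) l : rsum f (map g l) = rsum (fun a => f (g a)) l.
Proof. induction l; simpl; [lra| rewrite IHl; lra]. Qed.
Lemma rsum_ext {A} (f g:A->R) l : (forall a, In a l -> f a = g a) -> rsum f l = rsum g l.
Proof. induction l; simpl; intros H; [lra|]. rewrite H by auto. rewrite IHl; auto. Qed.
Lemma rsum_le {A} (f g:A->R) l : (forall a, In a l -> f a <= g a) -> rsum f l <= rsum g l.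
Proof. induction l; simpl; intros H; [lra|]. specialize (IHl (fun a H1 => H a (or_intror H1))).
  specialize (H a (or_introl eq_refl)). lra. Qed.
Lemma rsum_plus {A} (f g : A->R) l : rsum (fun a => f a + g a) l = rsum f l + rsum g l.
Proof. induction l; simpl; [lra| rewrite IHl; lra]. Qed.
Lemma rsum_minus {A} (f g : A->R) l : rsum (fun a => f a - g a) l = rsum f l - rsum g l.
Proof. induction l; simpl; [lra| rewrite IHl; lra]. Qed.
Lemma rsum_scal {A} c (f:A->R) l : rsum (fun a => c * f a) l = c * rsum f l.
Proof. induction l; simpl; [lra| rewrite IHl; lra]. Qed.
Lemma rsum_scalr {A} c (f:A->R) l : rsum (fun a => f a * c) l = rsum f l * c.
Proof. induction l; simpl; [lra| rewrite IHl; lra]. Qed.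
Lemma rsum_zero {A} (l:list A) : rsum (fun _ => 0) l = 0.
Proof. induction l; simpl; [lra| rewrite IHl; lra]. Qed.
Lemma rsum_nonneg {A} (f:A->R) l : (forall a, In a l -> 0 <= f a) -> 0 <= rsum f l.
Proof. intros H. rewrite <- (rsum_zero l). apply rsum_le. auto. Qed.
Lemma rsum_const {A} c (l:list A) : rsum (fun _ => c) l = INR (length l) * c.
Proof. induction l as [|a l IH]; [simpl; lra|].
  change (rsum (fun _ => c) (a::l)) with (c + rsum (fun _ => c) l). rewrite IH.
  change (length (a::l)) with (S (length l)). rewrite S_INR. lra. Qed.
Lemma INR_sumn_l {A} (f:A->nat) l : INR (sumn_l f l) = rsum (fun a => INR (f a)) l.
Proof. induction l; simpl; [reflexivity|]. rewrite plus_INR, IHl; reflexivity. Qed.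
Lemma rsum_ge_term {A} (f:A->R) l a : (forall b, In b l -> 0 <= f b) -> In a l -> f a <= rsum f l.
Proof. induction l; simpl; intros H Ha; [contradiction|]. destruct Ha as [<-|Ha].
  - assert (0 <= rsum f l) by (apply rsum_nonneg; auto). lra.
  - assert (f a <= rsum f l) by (apply IHl; [intros; apply H; auto| auto]).
    specialize (H a0 (or_introl eq_refl)). lra. Qed.
Lemma rsum_swap {A B} (f:A->B->R) l1 l2 :
  rsum (fun a => rsum (fun b => f a b) l2) l1 = rsum (fun b => rsum (fun a => f a b) l1) l2.
Proof. induction l1; simpl.
  - rewrite rsum_zero; reflexivity.
  - rewrite IHl1, <- rsum_plus. reflexivity. Qed.
Lemma rsum_max_ex (f:nat->R) k : (1 <= k)%nat -> exists i, In i (seq 0 k) /\ rsum f (seq 0 k) <= INR k * f i.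
Proof.
  intros Hk. assert (H: forall l : list nat, l <> [] -> exists i, In i l /\ forall j, In j l -> f j <= f i).
  { induction l as [|a l IH]; intros Hl; [congruence|]. destruct l as [|b l'].
    - exists a; split; [left; auto|]. intros j [<-|[]]; lra.
    - destruct IH as [i [Hi Hm]]; [congruence|].
      destruct (Rle_dec (f a) (f i)).
      + exists i; split; [right; auto|]. intros j [<-|Hj]; auto.
      + exists a; split; [left; auto|]. intros j [<-|Hj]; [lra|]. specialize (Hm j Hj); lra. }
  destruct (H (seq 0 k)) as [i [Hi Hm]]. { destruct k; [lia|]. simpl; congruence. }
  exists i; split; auto. replace (INR k) with (INR (length (seq 0 k))) by (rewrite length_seq; auto).
  rewrite <- rsum_const. apply rsum_le. auto. Qed.

Lemma prof_eqb_spec A B : prof_eqb A B = true <-> A = B.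
Proof. unfold prof_eqb. destruct (list_eq_dec bool_dec A B); split; congruence. Qed.
Lemma prof_eqb_refl A : prof_eqb A A = true.
Proof. apply prof_eqb_spec; auto. Qed.
Lemma prof_eqb_neq A B : A <> B -> prof_eqb A B = false.
Proof. intros H. destruct (prof_eqb A B) eqn:E; auto. apply prof_eqb_spec in E; congruence. Qed.

Lemma allp_len k B : In B (allp k) -> length B = k.
Proof. revert B; induction k; simpl; intros B H.
  - destruct H as [<-|[]]; reflexivity.
  - apply in_app_or in H; destruct H as [H|H]; apply in_map_iff in H; destruct H as [C [<- HC]];
    simpl; rewrite IHk; auto. Qed.
Lemma allp_in k B : length B = k -> In B (allp k).
Proof. revert B; induction k; simpl; intros B H.
  - destruct B; [left; auto| simpl in H; lia].
  - destruct B as [|b B]; simpl in H; [lia|]. apply in_or_app. destruct b; [left|right];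
    apply in_map; apply IHk; lia. Qed.
Lemma allp_nodup k : NoDup (allp k).
Proof. induction k; simpl.
  - constructor; [simpl; auto| constructor].
  - apply NoDup_app.
    + apply NoDup_map_NoDup_ForallPairs; auto. intros a b _ _ H; inversion H; auto.
    + apply NoDup_map_NoDup_ForallPairs; auto. intros a b _ _ H; inversion H; auto.
    + intros B H1 H2. apply in_map_iff in H1, H2. destruct H1 as [? [<- _]]. destruct H2 as [? [H _]]. discriminate.
Qed.

Lemma rsum_delta (l : list profile) (f : profile -> R) A : NoDup l -> In A l ->
  rsum (fun B => if prof_eqb B A then f B else 0) l = f A.
Proof. induction l; simpl; intros Hn Hi; [contradiction|]. inversion Hn; subst.
  destruct Hi as [<-|Hi].
  - rewrite prof_eqb_refl. rewrite (rsum_ext _ (fun _ => 0)). rewrite rsum_zero; lra.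
    intros B HB. rewrite prof_eqb_neq; auto. intros ->; contradiction.
  - rewrite prof_eqb_neq by (intros ->; contradiction). rewrite IHl; auto; lra. Qed.


Definition nv (x:state) (B:profile) : R := INR (npeers x B).
Definition ind (b:bool) : R := if b then 1 else 0.

Lemma ind_0_1 b : 0 <= ind b <= 1.
Proof. destruct b; simpl; lra. Qed.

Lemma nv_nonneg x B : 0 <= nv x B.
Proof. apply pos_INR. Qed.

Lemma Stot_R k x : INR (Stot k x) = rsum (nv x) (allp k).
Proof. unfold Stot. rewrite INR_sumn_l. reflexivity. Qed.

Lemma Schunk_R k x i : INR (Schunk k x i) = rsum (fun B => ind (holds B i) * nv x B) (allp k).
Proof. unfold Schunk. rewrite INR_sumn_l. apply rsum_ext. intros B _.
  unfold ind, nv. destruct (holds B i); simpl; lra. Qed.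

Lemma nv_add x A B : is_full A = false -> nv (add_peer x A) B = nv x B + ind (prof_eqb B A).
Proof. intros Hf. unfold nv, npeers, add_peer, ind. destruct (prof_eqb B A) eqn:E.
  - apply prof_eqb_spec in E; subst. rewrite Hf, plus_INR. simpl; lra.
  - destruct (is_full B); lra. Qed.

Lemma nv_rem x A B : is_full A = false -> (1 <= x A)%nat -> nv (rem_peer x A) B = nv x B - ind (prof_eqb B A).
Proof. intros Hf H1. unfold nv, npeers, rem_peer, ind. destruct (prof_eqb B A) eqn:E.
  - apply prof_eqb_spec in E; subst. rewrite Hf, minus_INR by lia. simpl; lra.
  - destruct (is_full B); lra. Qed.

Lemma wsum_add k x A (c : profile -> R) : In A (allp k) -> is_full A = false ->
  rsum (fun B => c B * nv (add_peer x A) B) (allp k) = rsum (fun B => c B * nv x B) (allp k) + c A.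
Proof. intros HA Hf. rewrite (rsum_ext _ (fun B => c B * nv x B + (if prof_eqb B A then c B else 0))).
  - rewrite rsum_plus, rsum_delta; auto using allp_nodup.
  - intros B _. rewrite nv_add by auto. unfold ind. destruct (prof_eqb B A); lra. Qed.

Lemma wsum_rem k x A (c : profile -> R) : In A (allp k) -> is_full A = false -> (1 <= x A)%nat ->
  rsum (fun B => c B * nv (rem_peer x A) B) (allp k) = rsum (fun B => c B * nv x B) (allp k) - c A.
Proof. intros HA Hf H1. rewrite (rsum_ext _ (fun B => c B * nv x B - (if prof_eqb B A then c B else 0))).
  - rewrite rsum_minus, rsum_delta; auto using allp_nodup.
  - intros B _. rewrite nv_rem by auto. unfold ind. destruct (prof_eqb B A); lra. Qed.

Lemma Stot_w k x : INR (Stot k x) = rsum (fun B => 1 * nv x B) (allp k).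
Proof. rewrite Stot_R. apply rsum_ext; intros; lra. Qed.

Lemma Stot_add k x A : In A (allp k) -> is_full A = false -> INR (Stot k (add_peer x A)) = INR (Stot k x) + 1.
Proof. intros. rewrite !Stot_w, wsum_add; auto. Qed.
Lemma Stot_rem k x A : In A (allp k) -> is_full A = false -> (1 <= x A)%nat -> INR (Stot k (rem_peer x A)) = INR (Stot k x) - 1.
Proof. intros. rewrite !Stot_w, wsum_rem; auto. Qed.
Lemma Schunk_add k x A i : In A (allp k) -> is_full A = false ->
  INR (Schunk k (add_peer x A) i) = INR (Schunk k x i) + ind (holds A i).
Proof. intros. rewrite !Schunk_R, wsum_add; auto. Qed.
Lemma Schunk_rem k x A i : In A (allp k) -> is_full A = false -> (1 <= x A)%nat ->
  INR (Schunk k (rem_peer x A) i) = INR (Schunk k x i) - ind (holds A i).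
Proof. intros. rewrite !Schunk_R, wsum_rem; auto. Qed.
Lemma S0_add k x A : INR (S0 k (add_peer x A)) = INR (S0 k x) + ind (prof_eqb (empty_prof k) A).
Proof. unfold S0, add_peer, ind. destruct (prof_eqb _ _); [rewrite plus_INR; simpl|]; lra. Qed.
Lemma S0_rem k x A : (1 <= x A)%nat -> INR (S0 k (rem_peer x A)) = INR (S0 k x) - ind (prof_eqb (empty_prof k) A).
Proof. intros H. unfold S0, rem_peer, ind. destruct (prof_eqb _ _) eqn:E; [|lra].
  apply prof_eqb_spec in E. rewrite E, minus_INR by lia. simpl; lra. Qed.

Lemma length_set_true A i : length (set_true A i) = length A.
Proof. revert i; induction A; intros [|i]; simpl; auto. Qed.
Lemma holds_set_true A i j : (i < length A)%nat -> holds (set_true A i) j = holds A j || Nat.eqb j i.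
Proof. unfold holds. revert i j; induction A as [|b A IH]; intros i j Hi; simpl in Hi; [lia|].
  destruct i as [|i]; destruct j as [|j]; simpl; try (destruct b; reflexivity);
    try (rewrite orb_false_r; reflexivity); try (apply IH; lia); auto. Qed.

Lemma is_full_holds B : is_full B = true <-> (forall j, (j < length B)%nat -> holds B j = true).
Proof. unfold is_full, holds. rewrite forallb_forall. split.
  - intros H j Hj. apply H. apply nth_In; auto.
  - intros H b Hb. destruct (In_nth _ _ false Hb) as [j [Hj <-]]. auto. Qed.

Lemma holds_empty k j : holds (empty_prof k) j = false.
Proof. unfold holds, empty_prof. revert j; induction k; intros [|j]; simpl; auto. Qed.
Lemma empty_in k : In (empty_prof k) (allp k).
Proof. apply allp_in. unfold empty_prof. apply repeat_length. Qed.
Lemma empty_not_full k : (1 <= k)%nat -> is_full (empty_prof k) = false.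
Proof. intros Hk. destruct (is_full (empty_prof k)) eqn:E; auto.
  apply is_full_holds with (j := 0%nat) in E. rewrite holds_empty in E; discriminate.
  unfold empty_prof; rewrite repeat_length; lia. Qed.

Definition fullp (k:nat) : profile := repeat true k.
Lemma fullp_in k : In (fullp k) (allp k).
Proof. apply allp_in. unfold fullp. apply repeat_length. Qed.
Lemma holds_fullp k j : (j < k)%nat -> holds (fullp k) j = true.
Proof. unfold holds, fullp. revert j; induction k; intros [|j] Hj; simpl; auto; try lia. apply IHk; lia. Qed.
Lemma prof_ext k A B : In A (allp k) -> In B (allp k) -> (forall j, (j < k)%nat -> holds A j = holds B j) -> A = B.
Proof. intros HA HB H. apply allp_len in HA, HB. apply nth_ext with false false; [congruence|].
  intros n Hn. apply H. lia. Qed.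
Lemma full_iff k B : In B (allp k) -> is_full B = prof_eqb B (fullp k).
Proof. intros HB. destruct (prof_eqb B (fullp k)) eqn:E.
  - apply prof_eqb_spec in E; subst. apply is_full_holds. unfold fullp; rewrite repeat_length. apply holds_fullp.
  - destruct (is_full B) eqn:F; auto. exfalso. assert (E': B <> fullp k) by (intro; subst; rewrite prof_eqb_refl in E; discriminate).
    apply E', (prof_ext k); auto using fullp_in. intros j Hj. rewrite holds_fullp by auto.
    apply is_full_holds; auto. rewrite (allp_len k B HB); auto. Qed.
Lemma full_npeers k x : nv x (fullp k) = 1.
Proof. unfold nv, npeers. replace (is_full (fullp k)) with true. reflexivity.
  symmetry. rewrite (full_iff k); auto using fullp_in. apply prof_eqb_refl. Qed.


Lemma rsum_seq_S (f : nat -> R) n : rsum f (seq 0 (S n)) = f 0%nat + rsum (fun l => f (S l)) (seq 0 n).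
Proof. simpl. rewrite <- seq_shift, rsum_map. reflexivity. Qed.

Lemma nchunks_R B : INR (nchunks B) = rsum (fun l => ind (holds B l)) (seq 0 (length B)).
Proof. induction B as [|b B IH]; [reflexivity|].
  simpl length. rewrite rsum_seq_S. unfold holds at 1. simpl nth.
  unfold nchunks in *. simpl filter. destruct b; simpl ind.
  - simpl length. rewrite S_INR, IH. unfold holds. simpl. lra.
  - rewrite IH. unfold holds; simpl; lra. Qed.

Lemma nchunks_Rk k B : In B (allp k) -> INR (nchunks B) = rsum (fun l => ind (holds B l)) (seq 0 k).
Proof. intros H. rewrite nchunks_R, (allp_len k B H). reflexivity. Qed.

Lemma rsum_delta_nat (f : nat -> R) i k : (i < k)%nat ->
  rsum (fun l => if Nat.eqb l i then f l else 0) (seq 0 k) = f i.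
Proof. intros Hi. assert (Hn := seq_NoDup k 0). assert (Hin : In i (seq 0 k)) by (apply in_seq; lia).
  clear Hi. induction (seq 0 k) as [|a l IH]; [contradiction|]. simpl. inversion Hn; subst.
  destruct Hin as [<-|Hin].
  - rewrite Nat.eqb_refl. rewrite (rsum_ext _ (fun _ => 0)), rsum_zero; [lra|].
    intros b Hb. destruct (Nat.eqb_spec b a); [subst; contradiction|auto].
  - destruct (Nat.eqb_spec a i); [subst; contradiction|]. rewrite IH; auto; lra. Qed.

Lemma rsum_ge_two (f : nat -> R) k j1 j2 : (j1 < k)%nat -> (j2 < k)%nat -> j1 <> j2 ->
  (forall l, 0 <= f l) -> f j1 + f j2 <= rsum f (seq 0 k).
Proof. intros H1 H2 H12 Hf.
  assert (E: forall l, f l = (if Nat.eqb l j1 then f l else 0) + ((if Nat.eqb l j1 then 0 else f l))).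
  { intros l; destruct (Nat.eqb l j1); lra. }
  rewrite (rsum_ext _ _ _ (fun l _ => E l)), rsum_plus, rsum_delta_nat by auto.
  assert (f j2 <= rsum (fun l => if Nat.eqb l j1 then 0 else f l) (seq 0 k)).
  { replace (f j2) with (if Nat.eqb j2 j1 then 0 else f j2).
    - apply (rsum_ge_term (fun l => if Nat.eqb l j1 then 0 else f l)).
      + intros b _; destruct (Nat.eqb b j1); auto; lra.
      + apply in_seq; lia.
    - destruct (Nat.eqb_spec j2 j1); congruence. }
  lra. Qed.

Lemma two_missing k B j1 j2 : In B (allp k) -> (j1 < k)%nat -> (j2 < k)%nat -> j1 <> j2 ->
  holds B j1 = false -> holds B j2 = false -> (nchunks B <= k - 2)%nat.
Proof. intros HB H1 H2 H12 F1 F2.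
  assert (INR (nchunks B) <= INR k - 2).
  { rewrite (nchunks_Rk k B HB).
    assert (Hs := rsum_ge_two (fun l => 1 - ind (holds B l)) k j1 j2 H1 H2 H12).
    rewrite rsum_minus, rsum_const, length_seq in Hs. rewrite F1, F2 in Hs. simpl ind in Hs.
    assert (0 <= 1 - 0 + (1 - 0)) by lra.
    assert (forall l, 0 <= 1 - ind (holds B l)) by (intros; destruct (holds B l); simpl; lra).
    specialize (Hs H0). lra. }
  assert (2 <= k)%nat by lia. rewrite <- (Nat.sub_add 2 k) in H by lia.
  rewrite plus_INR in H. simpl INR in H. apply INR_le. lra. Qed.

Lemma nchunks_empty k : nchunks (empty_prof k) = 0%nat.
Proof. unfold nchunks, empty_prof. induction k; simpl; auto. Qed.

Lemma nchunks_zero k B : In B (allp k) -> nchunks B = 0%nat -> B = empty_prof k.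
Proof. intros HB H0. apply (prof_ext k); auto using empty_in. intros j Hj. rewrite holds_empty.
  destruct (holds B j) eqn:E; auto. exfalso.
  assert (1 <= INR (nchunks B)).
  { rewrite (nchunks_Rk k B HB). replace 1 with (ind (holds B j)) by (rewrite E; reflexivity).
    apply (rsum_ge_term (fun l => ind (holds B l))). intros; apply ind_0_1. apply in_seq; lia. }
  rewrite H0 in H; simpl in H; lra. Qed.

Definition clubp (k j : nat) : profile := map (fun l => negb (Nat.eqb l j)) (seq 0 k).
Lemma clubp_in k j : In (clubp k j) (allp k).
Proof. apply allp_in. unfold clubp. rewrite length_map, length_seq; auto. Qed.
Lemma holds_clubp k j l : (l < k)%nat -> holds (clubp k j) l = negb (Nat.eqb l j).
Proof. intros Hl. unfold holds, clubp.
  rewrite (nth_indep _ _ ((fun l => negb (Nat.eqb l j)) 0%nat)) by (rewrite length_map, length_seq; auto).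
  rewrite (map_nth (fun l => negb (Nat.eqb l j))). rewrite seq_nth by auto. reflexivity. Qed.

Lemma club_char k B j : In B (allp k) -> (j < k)%nat -> holds B j = false -> ~ (nchunks B <= k - 2)%nat ->
  B = clubp k j.
Proof. intros HB Hj F Hn. apply (prof_ext k); auto using clubp_in. intros l Hl.
  rewrite holds_clubp by auto. destruct (Nat.eqb_spec l j); [subst; auto|].
  destruct (holds B l) eqn:E; auto. exfalso. apply Hn. apply (two_missing k B l j); auto. Qed.

Lemma nchunks_clubp k j : (j < k)%nat -> INR (nchunks (clubp k j)) = INR k - 1.
Proof. intros Hj. rewrite (nchunks_Rk k _ (clubp_in k j)).
  rewrite (rsum_ext _ (fun l => 1 - (if Nat.eqb l j then 1 else 0))).
  - rewrite rsum_minus, rsum_const, length_seq, rsum_delta_nat by auto. lra.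
  - intros l Hl. apply in_seq in Hl. rewrite holds_clubp by lia. destruct (Nat.eqb l j); simpl; lra. Qed.

Lemma set_true_full_club k A i : In A (allp k) -> (i < k)%nat -> holds A i = false ->
  is_full (set_true A i) = true -> A = clubp k i.
Proof. intros HA Hi F Hf. apply (prof_ext k); auto using clubp_in. intros l Hl.
  rewrite holds_clubp by auto. rewrite is_full_holds in Hf.
  assert (Hlen: length A = k) by (apply allp_len; auto).
  specialize (Hf l). rewrite length_set_true, holds_set_true in Hf by lia.
  destruct (Nat.eqb_spec l i); [subst; auto|]. rewrite orb_false_r in Hf. apply Hf; lia. Qed.

Lemma set_true_club_full k i : (i < k)%nat -> is_full (set_true (clubp k i) i) = true.
Proof. intros Hi. assert (Hlen: length (clubp k i) = k) by (apply allp_len, clubp_in).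
  apply is_full_holds. rewrite length_set_true, Hlen. intros l Hl.
  rewrite holds_set_true, holds_clubp by lia. destruct (Nat.eqb l i); auto. Qed.

Lemma clubp_not_full k i : (i < k)%nat -> is_full (clubp k i) = false.
Proof. intros Hi. destruct (is_full (clubp k i)) eqn:E; auto. rewrite is_full_holds in E.
  assert (Hlen: length (clubp k i) = k) by (apply allp_len, clubp_in).
  specialize (E i). rewrite Hlen, holds_clubp, Nat.eqb_refl in E by auto. simpl in E. discriminate (E Hi). Qed.

Lemma notfull_lacks k B : In B (allp k) -> is_full B = false -> exists j, (j < k)%nat /\ holds B j = false.
Proof. intros HB F. destruct (classic (exists j, (j < k)%nat /\ holds B j = false)) as [H|H]; auto.
  exfalso. assert (is_full B = true); [|congruence]. apply is_full_holds. rewrite (allp_len k B HB).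
  intros j Hj. destruct (holds B j) eqn:E; auto. exfalso; apply H; eauto. Qed.

Lemma lacks_notfull k B j : In B (allp k) -> (j < k)%nat -> holds B j = false -> is_full B = false.
Proof. intros HB Hj F. destruct (is_full B) eqn:E; auto. rewrite is_full_holds, (allp_len k B HB) in E.
  rewrite E in F; auto. Qed.


Definition LR (k:nat) (n:R) (s:nat->R) (sg:R) : R :=
  Cconst k * rsum (fun i => n - s i) (seq 0 k) + rsum (fun i => n / exp (s i)) (seq 0 k) + n / exp sg.

Lemma Lyap_LR k x : Lyap k x = LR k (INR (Stot k x)) (fun i => INR (Schunk k x i)) (INR (S0 k x)).
Proof. reflexivity. Qed.

Lemma exp_pos' a : 0 < exp a. Proof. apply exp_pos. Qed.
Lemma div_exp_S n a : n / exp (a + 1) = n / exp a / exp 1.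
Proof. rewrite exp_plus. field. split; apply Rgt_not_eq, exp_pos. Qed.
Lemma div_exp_P n a : n / exp (a - 1) = n / exp a * exp 1.
Proof. unfold Rminus. rewrite exp_plus, exp_Ropp. field. split; apply Rgt_not_eq, exp_pos. Qed.
Lemma exp1_gt2 : 2 < exp 1.
Proof. assert (H := exp_ineq1 1). lra. Qed.
Lemma exp1_le3 : exp 1 <= 3.
Proof. apply exp_le_3. Qed.
Lemma exp_ge1 a : 0 <= a -> 1 <= exp a.
Proof. intros. assert (H0 := exp_ineq1_le a). lra. Qed.
Lemma inv_exp_le1 a : 0 <= a -> / exp a <= 1.
Proof. intros. rewrite <- Rinv_1. apply Rinv_le_contravar; [lra|]. apply exp_ge1; auto. Qed.

Lemma Schunk_nonneg k x i : 0 <= INR (Schunk k x i).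
Proof. apply pos_INR. Qed.

Lemma div_nonneg a b : 0 <= a -> 0 < b -> 0 <= a / b.
Proof. intros. unfold Rdiv. apply Rmult_le_pos; auto. left; apply Rinv_0_lt_compat; auto. Qed.

Lemma inv_e_bounds : 0 < / exp 1 < 1.
Proof. assert (H := exp1_gt2). split; [apply Rinv_0_lt_compat; lra|].
  assert (H1: / exp 1 < / 1) by (apply Rinv_lt_contravar; lra). rewrite Rinv_1 in H1. exact H1. Qed.

Definition nn k x := INR (Stot k x).
Definition aa k x j := nn k x / exp (INR (Schunk k x j)).
Definition a0 k x := nn k x / exp (INR (S0 k x)).

Lemma aa_nonneg k x j : 0 <= aa k x j.
Proof. unfold aa, nn. apply div_nonneg; [apply pos_INR| apply exp_pos]. Qed.
Lemma a0_nonneg k x : 0 <= a0 k x.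
Proof. unfold a0, nn. apply div_nonneg; [apply pos_INR| apply exp_pos]. Qed.

Lemma arr_bound k x : (1 <= k)%nat ->
  Lyap k (add_peer x (empty_prof k)) - Lyap k x <=
  Cconst k * INR k + INR k + 1 - (1 - / exp 1) * a0 k x.
Proof. intros Hk. rewrite !Lyap_LR. unfold LR.
  rewrite Stot_add by auto using empty_in, empty_not_full.
  rewrite S0_add, prof_eqb_refl. simpl ind.
  rewrite (rsum_ext (fun i => INR (Stot k x) + 1 - INR (Schunk k (add_peer x (empty_prof k)) i))
    (fun i => (INR (Stot k x) - INR (Schunk k x i)) + 1)).
  2:{ intros i _. rewrite Schunk_add, holds_empty by auto using empty_in, empty_not_full. simpl; lra. }
  rewrite (rsum_ext (fun i => (INR (Stot k x) + 1) / exp (INR (Schunk k (add_peer x (empty_prof k)) i)))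
    (fun i => INR (Stot k x) / exp (INR (Schunk k x i)) + / exp (INR (Schunk k x i)))).
  2:{ intros i _. rewrite Schunk_add, holds_empty by auto using empty_in, empty_not_full. simpl.
      rewrite Rplus_0_r. field. apply Rgt_not_eq, exp_pos. }
  rewrite !rsum_plus, rsum_const, length_seq.
  assert (rsum (fun i => / exp (INR (Schunk k x i))) (seq 0 k) <= INR k).
  { replace (INR k) with (INR (length (seq 0 k)) * 1) by (rewrite length_seq; lra).
    rewrite <- rsum_const. apply rsum_le. intros i _. apply inv_exp_le1, pos_INR. }
  unfold a0, nn.
  set (e1 := exp (INR (S0 k x))). set (nS := INR (Stot k x)).
  assert (He1 : 1 <= e1) by (apply exp_ge1, pos_INR).
  rewrite div_exp_S. fold e1.
  assert (Hee: 2 < exp 1) by apply exp1_gt2.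
  assert (0 <= nS) by apply pos_INR.
  assert ((nS + 1) / e1 / exp 1 = nS / e1 * / exp 1 + / e1 / exp 1) by (field; lra).
  assert (/ e1 / exp 1 <= 1).
  { unfold Rdiv. assert (0 < / e1 <= 1) by (split; [apply Rinv_0_lt_compat; lra| rewrite <- Rinv_1; apply Rinv_le_contravar; lra]).
    assert (0 < / exp 1 < 1) by apply inv_e_bounds. nra. }
  rewrite H1. unfold Rdiv at 4 5. lra.
Qed.


Lemma LR_change k n s n' s' sg sg' : LR k n' s' sg' - LR k n s sg =
  Cconst k * rsum (fun i => (n' - s' i) - (n - s i)) (seq 0 k)
  + rsum (fun i => n' / exp (s' i) - n / exp (s i)) (seq 0 k) + (n' / exp sg' - n / exp sg).
Proof. unfold LR. rewrite !rsum_minus. ring. Qed.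

Lemma set_true_in k A i : In A (allp k) -> In (set_true A i) (allp k).
Proof. intros H. apply allp_in. rewrite length_set_true. apply allp_len; auto. Qed.

Lemma move_nc k x A i : In A (allp k) -> is_full A = false -> (i < k)%nat -> holds A i = false ->
  (1 <= x A)%nat -> is_full (set_true A i) = false ->
  Lyap k (move x A i) - Lyap k x =
  - Cconst k - (1 - / exp 1) * aa k x i + ind (prof_eqb (empty_prof k) A) * ((exp 1 - 1) * a0 k x).
Proof. intros HA HfA Hi HAi H1 Hf'. unfold move. rewrite Hf'.
  assert (HA' := set_true_in k A i HA).
  assert (Hlen : length A = k) by (apply allp_len; auto).
  rewrite !Lyap_LR, LR_change.
  rewrite Stot_add, Stot_rem by auto. rewrite S0_add, S0_rem by auto.
  assert (E0: prof_eqb (empty_prof k) (set_true A i) = false).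
  { destruct (prof_eqb _ _) eqn:E; auto. apply prof_eqb_spec in E.
    assert (holds (set_true A i) i = true) by (rewrite holds_set_true, Nat.eqb_refl, orb_true_r; auto; lia).
    rewrite <- E, holds_empty in H; discriminate. }
  rewrite E0. simpl (ind false).
  assert (HS: forall j, INR (Schunk k (add_peer (rem_peer x A) (set_true A i)) j) =
     INR (Schunk k x j) + (if Nat.eqb j i then 1 else 0)).
  { intros j. rewrite Schunk_add, Schunk_rem by auto. rewrite holds_set_true by lia.
    destruct (Nat.eqb_spec j i); [subst; rewrite HAi; simpl; lra|].
    rewrite orb_false_r. lra. }
  rewrite (rsum_ext _ (fun j => - (if Nat.eqb j i then 1 else 0))).
  2:{ intros j _. rewrite HS. lra. }
  rewrite (rsum_ext (fun j => _ / exp _ - _) (fun j => if Nat.eqb j i then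
     INR (Stot k x) / exp (INR (Schunk k x j) + 1) - INR (Stot k x) / exp (INR (Schunk k x j)) else 0)).
  2:{ intros j _. rewrite HS. destruct (Nat.eqb j i); [lra|]. rewrite Rplus_0_r. lra. }
  rewrite rsum_delta_nat by auto.
  replace (rsum (fun j => - (if Nat.eqb j i then 1 else 0)) (seq 0 k)) with (-1).
  2:{ rewrite (rsum_ext _ (fun j => -1 * (if Nat.eqb j i then 1 else 0))) by (intros; lra).
      rewrite rsum_scal, (rsum_delta_nat (fun _ => 1)) by auto. lra. }
  unfold aa, a0, nn. rewrite div_exp_S.
  destruct (prof_eqb (empty_prof k) A); simpl ind.
  - replace (INR (S0 k x) - 1 + 0) with (INR (S0 k x) - 1) by ring. rewrite div_exp_P.
    replace (INR (Stot k x) - 1 + 1) with (INR (Stot k x)) by ring. unfold Rdiv; ring.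
  - replace (INR (Stot k x) - 1 + 1) with (INR (Stot k x)) by ring.
    replace (INR (S0 k x) - 0 + 0) with (INR (S0 k x)) by ring. unfold Rdiv; ring.
Qed.

Lemma clubp_not_empty k i : (2 <= k)%nat -> (i < k)%nat -> prof_eqb (empty_prof k) (clubp k i) = false.
Proof. intros Hk Hi. destruct (prof_eqb _ _) eqn:E; auto. apply prof_eqb_spec in E.
  set (l := if Nat.eqb i 0 then 1%nat else 0%nat).
  assert (Hl : (l < k)%nat /\ l <> i) by (unfold l; destruct (Nat.eqb_spec i 0); lia).
  assert (H := holds_clubp k i l (proj1 Hl)). rewrite <- E, holds_empty in H.
  destruct (Nat.eqb_spec l i); [lia| discriminate]. Qed.

Lemma move_c k x A i : (2 <= k)%nat -> In A (allp k) -> is_full A = false -> (i < k)%nat -> holds A i = false ->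
  (1 <= x A)%nat -> is_full (set_true A i) = true ->
  Lyap k (move x A i) - Lyap k x <= - Cconst k + (exp 1 - 1) * rsum (fun j => ind (holds A j) * aa k x j) (seq 0 k).
Proof. intros Hk HA HfA Hi HAi H1 Hf'. unfold move. rewrite Hf'.
  assert (EA : A = clubp k i) by (apply (set_true_full_club k A i); auto).
  assert (E0 : prof_eqb (empty_prof k) A = false) by (rewrite EA; apply clubp_not_empty; auto).
  rewrite !Lyap_LR, LR_change, Stot_rem, S0_rem, E0 by auto. simpl ind.
  rewrite (rsum_ext (fun j => (_ - INR (Schunk k (rem_peer x A) j)) - _) (fun j => ind (holds A j) - 1)).
  2:{ intros j _. rewrite Schunk_rem by auto. lra. }
  assert (HC : rsum (fun j => ind (holds A j) - 1) (seq 0 k) <= -1).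
  { assert (- (ind (holds A i) - 1) <= rsum (fun j => - (ind (holds A j) - 1)) (seq 0 k)).
    { apply (rsum_ge_term (fun j => - (ind (holds A j) - 1))). intros b _; destruct (holds A b); simpl; lra.
      apply in_seq; lia. }
    rewrite (rsum_ext _ (fun j => -1 * (ind (holds A j) - 1))) in H by (intros; lra).
    rewrite rsum_scal in H. rewrite HAi in H. simpl in H. lra. }
  assert (HE : rsum (fun j => (INR (Stot k x) - 1) / exp (INR (Schunk k (rem_peer x A) j)) -
      INR (Stot k x) / exp (INR (Schunk k x j))) (seq 0 k) <=
      rsum (fun j => (exp 1 - 1) * (ind (holds A j) * aa k x j)) (seq 0 k)).
  { apply rsum_le. intros j _. rewrite Schunk_rem by auto. unfold aa, nn.
    assert (He := exp1_gt2). assert (Hp := exp_pos (INR (Schunk k x j))).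
    destruct (holds A j); simpl ind.
    - rewrite div_exp_P. unfold Rdiv. rewrite Rmult_1_l.
      assert (0 < / exp (INR (Schunk k x j))) by (apply Rinv_0_lt_compat; auto).
      assert ((INR (Stot k x) - 1) * / exp (INR (Schunk k x j)) * exp 1 - INR (Stot k x) * / exp (INR (Schunk k x j))
              = (exp 1 - 1) * (INR (Stot k x) * / exp (INR (Schunk k x j))) - exp 1 * / exp (INR (Schunk k x j))) by ring.
      nra.
    - rewrite Rminus_0_r. unfold Rdiv.
      assert (0 < / exp (INR (Schunk k x j))) by (apply Rinv_0_lt_compat; auto). nra. }
  rewrite rsum_scal in HE.
  assert (HS : (INR (Stot k x) - 1) / exp (INR (S0 k x) - 0) - INR (Stot k x) / exp (INR (S0 k x)) <= 0).
  { rewrite Rminus_0_r. unfold Rdiv. assert (0 < / exp (INR (S0 k x))) by (apply Rinv_0_lt_compat, exp_pos). nra. }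
  assert (Cconst k >= 0).
  { unfold Cconst. assert (0 < exp 1) by apply exp_pos. assert (0 <= INR k ^ 3) by (apply pow_le, pos_INR). nra. }
  nra.
Qed.


Lemma inv_INR_nonneg m : 0 <= / INR m.
Proof. destruct m. simpl. rewrite Rinv_0; lra. left. apply Rinv_0_lt_compat, lt_0_INR; lia. Qed.

Lemma Stot_ge1 k x : 1 <= nn k x.
Proof. unfold nn. rewrite Stot_R. rewrite <- (full_npeers k x). apply rsum_ge_term.
  intros; apply nv_nonneg. apply fullp_in. Qed.

Lemma w_nonneg k x B : 0 <= w k x B.
Proof. unfold w. apply div_nonneg. apply pos_INR. assert (H := Stot_ge1 k x). unfold nn in H. lra. Qed.

Lemma sum3_nonneg k f : (forall B1 B2 B3, 0 <= f B1 B2 B3) -> 0 <= sum3 k f.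
Proof. intros H. unfold sum3. repeat (apply rsum_nonneg; intros). auto. Qed.

Lemma sum3_le k f g : (forall B1 B2 B3, f B1 B2 B3 <= g B1 B2 B3) -> sum3 k f <= sum3 k g.
Proof. intros H. unfold sum3. repeat (apply rsum_le; intros). auto. Qed.

Lemma www_nonneg k x B1 B2 B3 : 0 <= w k x B1 * w k x B2 * w k x B3.
Proof. assert (H1 := w_nonneg k x B1). assert (H2 := w_nonneg k x B2). assert (H3 := w_nonneg k x B3).
  apply Rmult_le_pos; [apply Rmult_le_pos|]; auto. Qed.

Lemma p_empty_nonneg k x i : 0 <= p_empty k x i.
Proof. unfold p_empty. apply sum3_nonneg. intros. apply Rmult_le_pos. apply www_nonneg.
  destruct (rare3 _ _ _ _); [apply inv_INR_nonneg|lra]. Qed.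
Lemma p_mid_nonneg k x A i : 0 <= p_mid k x A i.
Proof. unfold p_mid. apply rsum_nonneg. intros. apply Rmult_le_pos. apply w_nonneg.
  destruct (_ && _); [apply inv_INR_nonneg|lra]. Qed.
Lemma p_last_nonneg k x A i : 0 <= p_last k x A i.
Proof. unfold p_last. apply sum3_nonneg. intros. apply Rmult_le_pos. apply www_nonneg.
  destruct (_ && _); lra. Qed.
Lemma p_dl_nonneg k x A i : 0 <= p_dl k x A i.
Proof. unfold p_dl. destruct (Nat.eqb _ _); [apply p_empty_nonneg|]. destruct (Nat.leb _ _);
  [apply p_mid_nonneg| apply p_last_nonneg]. Qed.

Definition DS k (g : profile -> nat -> R) : R :=
  rsum (fun A => if is_full A then 0 else rsum (fun i => if holds A i then 0 else g A i) (seq 0 k)) (allp k).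

Lemma DS_ext k g1 g2 : (forall A i, In A (allp k) -> is_full A = false -> In i (seq 0 k) -> holds A i = false ->
  g1 A i = g2 A i) -> DS k g1 = DS k g2.
Proof. intros H. unfold DS. apply rsum_ext. intros A HA. destruct (is_full A) eqn:E; auto.
  apply rsum_ext. intros i Hi. destruct (holds A i) eqn:E2; auto. Qed.
Lemma DS_le k g1 g2 : (forall A i, In A (allp k) -> is_full A = false -> In i (seq 0 k) -> holds A i = false ->
  g1 A i <= g2 A i) -> DS k g1 <= DS k g2.
Proof. intros H. unfold DS. apply rsum_le. intros A HA. destruct (is_full A) eqn:E; [lra|].
  apply rsum_le. intros i Hi. destruct (holds A i) eqn:E2; [lra|auto]. Qed.
Lemma DS_plus k g1 g2 : DS k (fun A i => g1 A i + g2 A i) = DS k g1 + DS k g2.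
Proof. unfold DS. rewrite <- rsum_plus. apply rsum_ext. intros A _. destruct (is_full A); [lra|].
  rewrite <- rsum_plus. apply rsum_ext. intros i _. destruct (holds A i); lra. Qed.
Lemma DS_scal k c g : DS k (fun A i => c * g A i) = c * DS k g.
Proof. unfold DS. rewrite <- rsum_scal. apply rsum_ext. intros A _. destruct (is_full A); [lra|].
  rewrite <- rsum_scal. apply rsum_ext. intros i _. destruct (holds A i); lra. Qed.
Lemma DS_nonneg k g : (forall A i, In A (allp k) -> is_full A = false -> In i (seq 0 k) -> holds A i = false ->
  0 <= g A i) -> 0 <= DS k g.
Proof. intros H. assert (E : DS k (fun _ _ => 0) = 0).
  { unfold DS. rewrite (rsum_ext _ (fun _ => 0)). apply rsum_zero. intros A _. destruct (is_full A); auto.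
    rewrite (rsum_ext _ (fun _ => 0)). apply rsum_zero. intros i _. destruct (holds A i); auto. }
  rewrite <- E. apply DS_le; auto. Qed.

Definition rate k x A i := INR (x A) * p_dl k x A i.
Lemma rate_nonneg k x A i : 0 <= rate k x A i.
Proof. unfold rate. apply Rmult_le_pos. apply pos_INR. apply p_dl_nonneg. Qed.

Definition Bd k x A i : R := - Cconst k
  + ind (prof_eqb (empty_prof k) A) * ((exp 1 - 1) * a0 k x - (1 - / exp 1) * aa k x i)
  + ind (is_full (set_true A i)) * ((exp 1 - 1) * rsum (fun j => ind (holds A j) * aa k x j) (seq 0 k)).

Lemma drift_bound k lam x : (2 <= k)%nat -> 0 <= lam ->
  drift k lam (Lyap k) x <= lam * (Cconst k * INR k + INR k + 1 - (1 - / exp 1) * a0 k x)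
     + DS k (fun A i => rate k x A i * Bd k x A i).
Proof. intros Hk Hl. unfold drift. apply Rplus_le_compat.
  - apply Rmult_le_compat_l; auto. apply arr_bound; lia.
  - apply DS_le. intros A i HA HfA Hi HAi. apply in_seq in Hi. unfold rate.
    destruct (Nat.eq_dec (x A) 0) as [Ex|Ex]; [rewrite Ex; simpl; lra|].
    apply Rmult_le_compat_l; [apply Rmult_le_pos; [apply pos_INR| apply p_dl_nonneg]|].
    assert (H1 : (1 <= x A)%nat) by lia.
    destruct (is_full (set_true A i)) eqn:Ef.
    + assert (EA : A = clubp k i) by (apply (set_true_full_club k A i); auto; lia).
      assert (E0 : prof_eqb (empty_prof k) A = false) by (rewrite EA; apply clubp_not_empty; lia).
      unfold Bd. rewrite E0, Ef. simpl ind. assert (H := move_c k x A i Hk HA HfA ltac:(lia) HAi H1 Ef). lra.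
    + rewrite move_nc by (auto; lia). unfold Bd. rewrite Ef. simpl ind.
      assert (He := inv_e_bounds). assert (Ha := aa_nonneg k x i).
      destruct (prof_eqb (empty_prof k) A); simpl ind; nra. Qed.


Definition qq k x j := INR (Schunk k x j) / nn k x.

Lemma nn_pos k x : 0 < nn k x.
Proof. assert (H := Stot_ge1 k x). lra. Qed.

Lemma w_eq k x B : w k x B = nv x B / nn k x.
Proof. reflexivity. Qed.

Lemma sum_w_f k x f : rsum (fun B => w k x B * f B) (allp k) = rsum (fun B => f B * nv x B) (allp k) / nn k x.
Proof. unfold Rdiv. rewrite <- rsum_scalr. apply rsum_ext. intros B _. rewrite w_eq. unfold Rdiv. ring. Qed.

Lemma sum_w_1 k x : rsum (fun B => w k x B * 1) (allp k) = 1.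
Proof. rewrite sum_w_f, <- Stot_w. fold (nn k x). field. apply Rgt_not_eq, nn_pos. Qed.
Lemma sum_w_h k x j : rsum (fun B => w k x B * ind (holds B j)) (allp k) = qq k x j.
Proof. rewrite sum_w_f, <- Schunk_R. reflexivity. Qed.
Lemma sum_w_nh k x j : rsum (fun B => w k x B * (1 - ind (holds B j))) (allp k) = 1 - qq k x j.
Proof. rewrite (rsum_ext _ (fun B => w k x B * 1 - w k x B * ind (holds B j))) by (intros; ring).
  rewrite rsum_minus, sum_w_1, sum_w_h. reflexivity. Qed.
Lemma sum_w_d k x A : In A (allp k) -> rsum (fun B => w k x B * ind (prof_eqb B A)) (allp k) = w k x A.
Proof. intros HA. rewrite (rsum_ext _ (fun B => if prof_eqb B A then w k x B else 0)).
  apply rsum_delta; auto using allp_nodup. intros B _. destruct (prof_eqb B A); simpl; ring. Qed.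

Lemma sum3_ext k f g : (forall B1 B2 B3, f B1 B2 B3 = g B1 B2 B3) -> sum3 k f = sum3 k g.
Proof. intros H. unfold sum3. repeat (apply rsum_ext; intros). auto. Qed.
Lemma sum3_plus k f g : sum3 k (fun B1 B2 B3 => f B1 B2 B3 + g B1 B2 B3) = sum3 k f + sum3 k g.
Proof. unfold sum3. rewrite <- rsum_plus. apply rsum_ext; intros. rewrite <- rsum_plus. apply rsum_ext; intros.
  rewrite <- rsum_plus. reflexivity. Qed.
Lemma sum3_scal k c f : sum3 k (fun B1 B2 B3 => c * f B1 B2 B3) = c * sum3 k f.
Proof. unfold sum3. rewrite <- rsum_scal. apply rsum_ext; intros. rewrite <- rsum_scal. apply rsum_ext; intros.
  rewrite <- rsum_scal. reflexivity. Qed.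

Lemma sum3_fact k x f1 f2 f3 : sum3 k (fun B1 B2 B3 => w k x B1 * w k x B2 * w k x B3 * (f1 B1 * f2 B2 * f3 B3)) =
  rsum (fun B => w k x B * f1 B) (allp k) * rsum (fun B => w k x B * f2 B) (allp k) * rsum (fun B => w k x B * f3 B) (allp k).
Proof. unfold sum3.
  set (S2 := rsum (fun B => w k x B * f2 B) (allp k)). set (S3 := rsum (fun B => w k x B * f3 B) (allp k)).
  transitivity (rsum (fun B1 => w k x B1 * f1 B1 * (S2 * S3)) (allp k)).
  - apply rsum_ext; intros B1 _.
    transitivity (rsum (fun B2 => w k x B1 * f1 B1 * (w k x B2 * f2 B2) * S3) (allp k)).
    + apply rsum_ext; intros B2 _. unfold S3. rewrite <- rsum_scal. apply rsum_ext; intros; ring.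
    + rewrite rsum_scalr, rsum_scal. fold S2. ring.
  - rewrite rsum_scalr. ring. Qed.

Lemma rsum_sum3 {T} k (F : T -> profile -> profile -> profile -> R) l :
  rsum (fun i => sum3 k (F i)) l = sum3 k (fun B1 B2 B3 => rsum (fun i => F i B1 B2 B3) l).
Proof. unfold sum3. rewrite rsum_swap. apply rsum_ext; intros. rewrite rsum_swap. apply rsum_ext; intros.
  rewrite rsum_swap. reflexivity. Qed.

Lemma len_filter_R {T} (p : T -> bool) l : INR (length (filter p l)) = rsum (fun i => ind (p i)) l.
Proof. induction l; simpl; auto. destruct (p a); simpl length; [rewrite S_INR|]; rewrite IHl; simpl; lra. Qed.

Lemma inv_INR_le1 m : / INR m <= 1.
Proof. destruct m. simpl; rewrite Rinv_0; lra. rewrite <- Rinv_1. apply Rinv_le_contravar; [lra|].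
  rewrite S_INR. assert (H := pos_INR m). lra. Qed.

Definition hh (B : profile) j := ind (holds B j).

Lemma rare_ind B1 B2 B3 i : ind (rare3 B1 B2 B3 i) =
  hh B1 i * (1 - hh B2 i) * (1 - hh B3 i) + (1 - hh B1 i) * hh B2 i * (1 - hh B3 i) + (1 - hh B1 i) * (1 - hh B2 i) * hh B3 i.
Proof. unfold rare3, cnt3, hh. destruct (holds B1 i), (holds B2 i), (holds B3 i); simpl; lra. Qed.

Lemma cnt2_ind B1 B2 B3 l : ind (Nat.leb 2 (cnt3 B1 B2 B3 l)) <= hh B1 l * hh B2 l + hh B1 l * hh B3 l + hh B2 l * hh B3 l.
Proof. unfold cnt3, hh. destruct (holds B1 l), (holds B2 l), (holds B3 l); simpl; lra. Qed.

Lemma prob_rare k x i : sum3 k (fun B1 B2 B3 => w k x B1 * w k x B2 * w k x B3 * ind (rare3 B1 B2 B3 i)) =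
  3 * qq k x i * (1 - qq k x i) ^ 2.
Proof. rewrite (sum3_ext _ _ (fun B1 B2 B3 =>
   w k x B1 * w k x B2 * w k x B3 * (hh B1 i * (1 - hh B2 i) * (1 - hh B3 i)) +
   (w k x B1 * w k x B2 * w k x B3 * ((1 - hh B1 i) * hh B2 i * (1 - hh B3 i)) +
   w k x B1 * w k x B2 * w k x B3 * ((1 - hh B1 i) * (1 - hh B2 i) * hh B3 i)))).
  2:{ intros. rewrite rare_ind. ring. }
  rewrite !sum3_plus, !sum3_fact. unfold hh. rewrite sum_w_h, sum_w_nh. ring. Qed.

Lemma p_empty_up k x i : p_empty k x i <= 3 * qq k x i * (1 - qq k x i) ^ 2.
Proof. rewrite <- prob_rare. unfold p_empty. apply sum3_le. intros. apply Rmult_le_compat_l. apply www_nonneg.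
  destruct (rare3 _ _ _ _); simpl; [apply inv_INR_le1| lra]. Qed.

Definition P0 k x := rsum (fun i => p_empty k x i) (seq 0 k).

Lemma P0_up k x : P0 k x <= rsum (fun i => 3 * qq k x i * (1 - qq k x i) ^ 2) (seq 0 k).
Proof. apply rsum_le. intros. apply p_empty_up. Qed.

Lemma P0_lo k x j : (j < k)%nat -> 3 * qq k x j * (1 - qq k x j) ^ 2 <= P0 k x.
Proof. intros Hj. rewrite <- prob_rare. unfold P0, p_empty. rewrite rsum_sum3. apply sum3_le. intros B1 B2 B3.
  rewrite rsum_scal. apply Rmult_le_compat_l. apply www_nonneg.
  assert (E : rsum (fun i => if rare3 B1 B2 B3 i then / INR (nrare k B1 B2 B3) else 0) (seq 0 k) =
     INR (nrare k B1 B2 B3) * / INR (nrare k B1 B2 B3)).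
  { unfold nrare at 2. rewrite len_filter_R. rewrite <- rsum_scalr. apply rsum_ext. intros; unfold ind.
    destruct (rare3 _ _ _ _); ring. }
  rewrite E. destruct (rare3 B1 B2 B3 j) eqn:Er; simpl ind.
  - assert (1 <= INR (nrare k B1 B2 B3)).
    { unfold nrare. rewrite len_filter_R. replace 1 with (ind (rare3 B1 B2 B3 j)) by (rewrite Er; auto).
      apply (rsum_ge_term (fun i => ind (rare3 B1 B2 B3 i))). intros; apply ind_0_1. apply in_seq; lia. }
    rewrite Rinv_r; lra.
  - destruct (nrare k B1 B2 B3). simpl; lra. rewrite Rinv_r. lra. apply not_0_INR; lia. Qed.

Lemma p_empty_lo k x j : (1 <= k)%nat -> (j < k)%nat -> 3 * qq k x j * (1 - qq k x j) ^ 2 / INR k <= p_empty k x j.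
Proof. intros Hk Hj. rewrite <- prob_rare. unfold Rdiv. rewrite Rmult_comm, <- sum3_scal. unfold p_empty.
  apply sum3_le. intros B1 B2 B3. rewrite Rmult_comm, Rmult_assoc. apply Rmult_le_compat_l. apply www_nonneg.
  destruct (rare3 B1 B2 B3 j) eqn:Er; simpl ind; [|lra]. rewrite Rmult_1_l.
  assert (1 <= INR (nrare k B1 B2 B3)).
  { unfold nrare. rewrite len_filter_R. replace 1 with (ind (rare3 B1 B2 B3 j)) by (rewrite Er; auto).
    apply (rsum_ge_term (fun i => ind (rare3 B1 B2 B3 i))). intros; apply ind_0_1. apply in_seq; lia. }
  apply Rinv_le_contravar; [lra|]. unfold nrare. apply le_INR.
  rewrite <- (length_seq k 0) at 2. apply filter_length_le. Qed.


Lemma p_mid_lo k x A j : In A (allp k) -> (j < k)%nat -> holds A j = false ->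
  qq k x j <= rsum (fun i => if holds A i then 0 else p_mid k x A i) (seq 0 k).
Proof. intros HA Hj HAj.
  rewrite (rsum_ext _ (fun i => rsum (fun B => w k x B *
    (if holds B i && negb (holds A i) then / INR (nmatch k A B) else 0)) (allp k))).
  2:{ intros i _. unfold p_mid. destruct (holds A i) eqn:E; auto.
      rewrite (rsum_ext _ (fun _ => 0)). rewrite rsum_zero; auto. intros B _. rewrite andb_false_r. ring. }
  rewrite rsum_swap. rewrite <- sum_w_h. apply rsum_le. intros B _. rewrite rsum_scal.
  apply Rmult_le_compat_l. apply w_nonneg.
  assert (E : rsum (fun i => if holds B i && negb (holds A i) then / INR (nmatch k A B) else 0) (seq 0 k) =
     INR (nmatch k A B) * / INR (nmatch k A B)).
  { unfold nmatch at 2. rewrite len_filter_R. rewrite <- rsum_scalr. apply rsum_ext. intros; unfold ind.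
    destruct (_ && _); ring. }
  rewrite E. destruct (holds B j) eqn:Eb; simpl ind.
  - assert (1 <= INR (nmatch k A B)).
    { unfold nmatch. rewrite len_filter_R.
      replace 1 with (ind (holds B j && negb (holds A j))) by (rewrite Eb, HAj; auto).
      apply (rsum_ge_term (fun i => ind (holds B i && negb (holds A i)))). intros; apply ind_0_1. apply in_seq; lia. }
    rewrite Rinv_r; lra.
  - destruct (nmatch k A B). simpl; lra. rewrite Rinv_r. lra. apply not_0_INR; lia. Qed.

Definition dd (B A : profile) := ind (prof_eqb B A).

Lemma last_ind_lo k A j B1 B2 B3 : holds A j = false ->
  dd B1 A * dd B2 A * hh B3 j + dd B1 A * hh B2 j * dd B3 A + hh B1 j * dd B2 A * dd B3 A <=
  (if negb (holds A j) && (holds B1 j || holds B2 j || holds B3 j)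
        && forallb (fun l => negb (holds A l) || Nat.leb 2 (cnt3 B1 B2 B3 l)) (seq 0 k)
     then 1 else 0).
Proof. intros HAj. unfold dd, hh.
  assert (Hge : forall c : bool, 0 <= (if c then 1 else 0)) by (intros []; lra).
  destruct (prof_eqb B1 A) eqn:E1, (prof_eqb B2 A) eqn:E2, (prof_eqb B3 A) eqn:E3; simpl ind;
  repeat match goal with H : prof_eqb _ _ = true |- _ => apply prof_eqb_spec in H; subst end;
  rewrite ?HAj; simpl negb; simpl andb. all: rewrite ?orb_false_l, ?orb_false_r.
  all: try (ring_simplify; match goal with |- context [if ?c then 1 else 0] => apply (Hge c) end).
  - simpl; lra.
  - destruct (holds B3 j); simpl ind; simpl andb; [|lra]. replace (forallb _ _) with true; [lra|].
    symmetry; apply forallb_forall; intros l _; unfold cnt3; destruct (holds A l), (holds B3 l); reflexivity.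
  - destruct (holds B2 j); simpl ind; simpl andb; [|lra]. replace (forallb _ _) with true; [lra|].
    symmetry; apply forallb_forall; intros l _; unfold cnt3; destruct (holds A l), (holds B2 l); reflexivity.
  - destruct (holds B1 j); simpl ind; simpl andb; [|lra]. replace (forallb _ _) with true; [lra|].
    symmetry; apply forallb_forall; intros l _; unfold cnt3; destruct (holds A l), (holds B1 l); reflexivity.
Qed.

Lemma p_last_lo k x A j : In A (allp k) -> holds A j = false ->
  3 * w k x A ^ 2 * qq k x j <= p_last k x A j.
Proof. intros HA HAj.
  assert (E : 3 * w k x A ^ 2 * qq k x j = sum3 k (fun B1 B2 B3 => w k x B1 * w k x B2 * w k x B3 *
     (dd B1 A * dd B2 A * hh B3 j + dd B1 A * hh B2 j * dd B3 A + hh B1 j * dd B2 A * dd B3 A))).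
  { rewrite (sum3_ext _ _ (fun B1 B2 B3 => w k x B1 * w k x B2 * w k x B3 * (dd B1 A * dd B2 A * hh B3 j)
      + (w k x B1 * w k x B2 * w k x B3 * (dd B1 A * hh B2 j * dd B3 A)
      + w k x B1 * w k x B2 * w k x B3 * (hh B1 j * dd B2 A * dd B3 A)))) by (intros; ring).
    rewrite !sum3_plus, !sum3_fact. unfold dd, hh. rewrite !sum_w_d, !sum_w_h by auto. ring. }
  rewrite E. unfold p_last. apply sum3_le. intros. apply Rmult_le_compat_l. apply www_nonneg.
  apply last_ind_lo; auto. Qed.

Lemma p_last_up k x A i l : (l < k)%nat -> holds A l = true -> p_last k x A i <= 3 * qq k x l ^ 2.
Proof. intros Hl HAl.
  assert (E : 3 * qq k x l ^ 2 = sum3 k (fun B1 B2 B3 => w k x B1 * w k x B2 * w k x B3 *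
     (hh B1 l * hh B2 l + hh B1 l * hh B3 l + hh B2 l * hh B3 l))).
  { rewrite (sum3_ext _ _ (fun B1 B2 B3 => w k x B1 * w k x B2 * w k x B3 * (hh B1 l * hh B2 l * 1)
      + (w k x B1 * w k x B2 * w k x B3 * (hh B1 l * 1 * hh B3 l)
      + w k x B1 * w k x B2 * w k x B3 * (1 * hh B2 l * hh B3 l)))) by (intros; ring).
    rewrite !sum3_plus, !sum3_fact. unfold hh. rewrite !sum_w_h, sum_w_1. ring. }
  rewrite E. unfold p_last. apply sum3_le. intros B1 B2 B3. apply Rmult_le_compat_l. apply www_nonneg.
  destruct (_ && _ && _) eqn:Ec; [|unfold hh; destruct (holds B1 l), (holds B2 l), (holds B3 l); simpl; lra].
  apply andb_true_iff in Ec. destruct Ec as [_ Ec]. rewrite forallb_forall in Ec.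
  specialize (Ec l ltac:(apply in_seq; lia)). rewrite HAl in Ec. change (negb true) with false in Ec. rewrite orb_false_l in Ec.
  assert (H := cnt2_ind B1 B2 B3 l). rewrite Ec in H. simpl in H. lra. Qed.


Lemma prof_eqb_sym A B : prof_eqb A B = prof_eqb B A.
Proof. destruct (prof_eqb A B) eqn:E; symmetry.
  - apply prof_eqb_spec in E; subst; apply prof_eqb_refl.
  - destruct (prof_eqb B A) eqn:E2; auto. apply prof_eqb_spec in E2; subst. rewrite prof_eqb_refl in E; auto. Qed.

Definition sig0 k x := INR (S0 k x).

Lemma nv_empty k x : (1 <= k)%nat -> nv x (empty_prof k) = sig0 k x.
Proof. intros Hk. unfold nv, npeers, sig0, S0. rewrite empty_not_full; auto. Qed.

Lemma nv_nonfull x A : is_full A = false -> nv x A = INR (x A).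
Proof. intros H. unfold nv, npeers. rewrite H; auto. Qed.

Lemma p_dl_empty k x i : p_dl k x (empty_prof k) i = p_empty k x i.
Proof. unfold p_dl. rewrite nchunks_empty. reflexivity. Qed.

Lemma DS_empty k g : (1 <= k)%nat ->
  DS k (fun A i => ind (prof_eqb (empty_prof k) A) * g A i) = rsum (fun i => g (empty_prof k) i) (seq 0 k).
Proof. intros Hk. unfold DS.
  rewrite (rsum_ext _ (fun A => if prof_eqb A (empty_prof k) then
     rsum (fun i => g A i) (seq 0 k) else 0)).
  - rewrite rsum_delta; auto using allp_nodup, empty_in.
  - intros A HA. rewrite (prof_eqb_sym (empty_prof k) A). destruct (prof_eqb A (empty_prof k)) eqn:E.
    + apply prof_eqb_spec in E; subst. rewrite empty_not_full by auto. apply rsum_ext.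
      intros i _. rewrite holds_empty. simpl; ring.
    + destruct (is_full A); auto. rewrite (rsum_ext _ (fun _ => 0)). apply rsum_zero.
      intros i _. destruct (holds A i); simpl; ring. Qed.

Definition Rtot k x := DS k (rate k x).
Definition Rne k x := DS k (fun A i => (1 - ind (prof_eqb (empty_prof k) A)) * rate k x A i).
Definition Ne k x := sig0 k x * rsum (fun i => p_empty k x i * aa k x i) (seq 0 k).
Definition E2 k x := DS k (fun A i => rate k x A i * ind (is_full (set_true A i)) *
  rsum (fun j => ind (holds A j) * aa k x j) (seq 0 k)).

Lemma rate_empty k x i : rate k x (empty_prof k) i = sig0 k x * p_empty k x i.
Proof. unfold rate. rewrite p_dl_empty. reflexivity. Qed.

Lemma Rtot_split k x : (1 <= k)%nat -> Rtot k x = sig0 k x * P0 k x + Rne k x.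
Proof. intros Hk. unfold Rtot, Rne.
  rewrite (DS_ext _ (rate k x) (fun A i => ind (prof_eqb (empty_prof k) A) * rate k x A i +
     (1 - ind (prof_eqb (empty_prof k) A)) * rate k x A i)) by (intros; ring).
  rewrite DS_plus, DS_empty by auto. unfold P0. rewrite <- rsum_scal. f_equal.
  apply rsum_ext. intros. apply rate_empty. Qed.

Lemma DS_Bd k x : (1 <= k)%nat -> DS k (fun A i => rate k x A i * Bd k x A i) =
  - Cconst k * Rtot k x + (exp 1 - 1) * a0 k x * (sig0 k x * P0 k x) - (1 - / exp 1) * Ne k x
  + (exp 1 - 1) * E2 k x.
Proof. intros Hk. unfold Bd.
  rewrite (DS_ext _ _ (fun A i => (- Cconst k) * rate k x A i +
     (ind (prof_eqb (empty_prof k) A) * (rate k x A i * ((exp 1 - 1) * a0 k x - (1 - / exp 1) * aa k x i)) +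
      (exp 1 - 1) * (rate k x A i * ind (is_full (set_true A i)) *
        rsum (fun j => ind (holds A j) * aa k x j) (seq 0 k))))) by (intros; ring).
  rewrite !DS_plus, !DS_scal, DS_empty by auto. unfold Rtot, E2, Ne, P0.
  rewrite (rsum_ext _ (fun i => ((exp 1 - 1) * a0 k x * sig0 k x) * p_empty k x i
     - ((1 - / exp 1) * sig0 k x) * (p_empty k x i * aa k x i))).
  2:{ intros. rewrite rate_empty. ring. }
  rewrite rsum_minus, !rsum_scal. change (rsum (fun i => p_empty k x i) (seq 0 k)) with (rsum (p_empty k x) (seq 0 k)). ring. Qed.


Definition midb k A j := negb (holds A j) && negb (prof_eqb (empty_prof k) A) && Nat.leb (nchunks A) (k - 2).
Definition Mj k x j := rsum (fun A => ind (midb k A j) * nv x A) (allp k).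
Definition Qj k x j := nv x (clubp k j).

Lemma nchunks_clubp_nat k j : (1 <= k)%nat -> (j < k)%nat -> nchunks (clubp k j) = (k - 1)%nat.
Proof. intros Hk Hj. apply INR_eq. rewrite nchunks_clubp, minus_INR by auto. simpl; lra. Qed.

Lemma clubp_not_mid k j : (2 <= k)%nat -> (j < k)%nat -> Nat.leb (nchunks (clubp k j)) (k - 2) = false.
Proof. intros. rewrite nchunks_clubp_nat by lia. apply Nat.leb_gt. lia. Qed.

Lemma p_dl_club k x j i : (2 <= k)%nat -> (j < k)%nat -> p_dl k x (clubp k j) i = p_last k x (clubp k j) i.
Proof. intros. unfold p_dl. rewrite clubp_not_mid by auto. rewrite nchunks_clubp_nat by lia.
  replace (Nat.eqb (k-1) 0) with false by (symmetry; apply Nat.eqb_neq; lia). reflexivity. Qed.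

Lemma inner_nonneg k x A : 0 <= rsum (fun i => if holds A i then 0 else
   (1 - ind (prof_eqb (empty_prof k) A)) * rate k x A i) (seq 0 k).
Proof. apply rsum_nonneg. intros i _. destruct (holds A i); [lra|]. apply Rmult_le_pos.
  destruct (prof_eqb _ _); simpl; lra. apply rate_nonneg. Qed.

Lemma Rne_lo k x j : (2 <= k)%nat -> (j < k)%nat ->
  qq k x j * Mj k x j + 3 * qq k x j * Qj k x j ^ 3 / nn k x ^ 2 <= Rne k x.
Proof. intros Hk Hj.
  assert (E : qq k x j * Mj k x j + 3 * qq k x j * Qj k x j ^ 3 / nn k x ^ 2 =
    rsum (fun A => ind (midb k A j) * nv x A * qq k x j +
      (if prof_eqb A (clubp k j) then 3 * qq k x j * nv x A ^ 3 / nn k x ^ 2 else 0)) (allp k)).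
  { rewrite rsum_plus, rsum_delta by auto using allp_nodup, clubp_in. unfold Mj, Qj.
    rewrite rsum_scalr. ring. }
  rewrite E. unfold Rne, DS. apply rsum_le. intros A HA.
  assert (Hn := nn_pos k x).
  destruct (is_full A) eqn:Ef.
  { assert (HAj : holds A j = true) by (apply is_full_holds; auto; rewrite (allp_len k A HA); auto).
    unfold midb. rewrite HAj. simpl. destruct (prof_eqb A (clubp k j)) eqn:Ec; [|lra].
    apply prof_eqb_spec in Ec. subst. rewrite clubp_not_full in Ef by auto. discriminate. }
  destruct (prof_eqb (empty_prof k) A) eqn:E0.
  { apply prof_eqb_spec in E0. subst. unfold midb. rewrite prof_eqb_refl. rewrite andb_false_r. simpl ind.
    rewrite clubp_not_empty by auto. rewrite Rmult_0_l, Rmult_0_l, Rplus_0_l.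
    assert (H0 := inner_nonneg k x (empty_prof k)). rewrite prof_eqb_refl in H0. simpl ind in H0. exact H0. }
  assert (HIn := inner_nonneg k x A). rewrite E0 in HIn. simpl ind in HIn.
  simpl ind. rewrite (nv_nonfull x A Ef).
  destruct (holds A j) eqn:HAj.
  { unfold midb. rewrite HAj. simpl. destruct (prof_eqb A (clubp k j)) eqn:Ec.
    - apply prof_eqb_spec in Ec. subst. rewrite holds_clubp, Nat.eqb_refl in HAj by auto. discriminate.
    - rewrite Rplus_0_r, Rmult_0_l, Rmult_0_l. exact HIn. }
  assert (HAne : A <> empty_prof k) by (intros ->; rewrite prof_eqb_refl in E0; discriminate).
  assert (Hnz : Nat.eqb (nchunks A) 0 = false).
  { apply Nat.eqb_neq. intros Hz. apply HAne. apply nchunks_zero; auto. }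
  destruct (Nat.leb (nchunks A) (k - 2)) eqn:Em.
  - assert (Hmid : midb k A j = true) by (unfold midb; rewrite HAj, E0, Em; auto).
    rewrite Hmid. destruct (prof_eqb A (clubp k j)) eqn:Ec.
    { apply prof_eqb_spec in Ec. subst. rewrite clubp_not_mid in Em by auto. discriminate. }
    simpl ind. rewrite Rplus_0_r, Rmult_1_l.
    rewrite (rsum_ext _ (fun i => INR (x A) * (if holds A i then 0 else p_mid k x A i))).
    2:{ intros i _. destruct (holds A i); [ring|]. unfold rate, p_dl. rewrite Hnz, Em. ring. }
    rewrite rsum_scal. assert (Hq := p_mid_lo k x A j HA Hj HAj). assert (Hx := pos_INR (x A)).
    simpl ind. nra.
  - assert (Hmid : midb k A j = false) by (unfold midb; rewrite Em; apply andb_false_r).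
    rewrite Hmid. simpl ind. rewrite Rmult_0_l, Rmult_0_l, Rplus_0_l.
    destruct (prof_eqb A (clubp k j)) eqn:Ec; [|exact HIn].
    apply prof_eqb_spec in Ec. subst.
    eapply Rle_trans; [|apply (rsum_ge_term (fun i => if holds (clubp k j) i then 0 else
       (1 - 0) * rate k x (clubp k j) i)) with (a := j)].
    + rewrite HAj. unfold rate. rewrite p_dl_club by auto.
      assert (H3 := p_last_lo k x (clubp k j) j (clubp_in k j) HAj).
      rewrite w_eq in H3. rewrite nv_nonfull in H3 by auto.
      assert (0 <= INR (x (clubp k j))) by apply pos_INR.
      replace (3 * qq k x j * INR (x (clubp k j)) ^ 3 / nn k x ^ 2) with
        (INR (x (clubp k j)) * (3 * (INR (x (clubp k j)) / nn k x) ^ 2 * qq k x j)) by (field; lra).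
      rewrite Rminus_0_r, Rmult_1_l. apply Rmult_le_compat_l; auto.
    + intros i _. destruct (holds (clubp k j) i); [lra|]. rewrite Rminus_0_r, Rmult_1_l. apply rate_nonneg.
    + apply in_seq; lia.
Qed.


Lemma lack_partition k B j : (2 <= k)%nat -> (j < k)%nat -> In B (allp k) ->
  1 - ind (holds B j) = ind (prof_eqb B (empty_prof k)) + ind (midb k B j) + ind (prof_eqb B (clubp k j)).
Proof. intros Hk Hj HB. unfold midb. destruct (holds B j) eqn:H; simpl negb; simpl andb.
  - destruct (prof_eqb B (empty_prof k)) eqn:E1.
    { apply prof_eqb_spec in E1; subst. rewrite holds_empty in H; discriminate. }
    destruct (prof_eqb B (clubp k j)) eqn:E2.
    { apply prof_eqb_spec in E2; subst. rewrite holds_clubp, Nat.eqb_refl in H by auto. discriminate. }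
    simpl; lra.
  - rewrite (prof_eqb_sym (empty_prof k) B). destruct (prof_eqb B (empty_prof k)) eqn:E1.
    + apply prof_eqb_spec in E1; subst. rewrite clubp_not_empty by auto. simpl; lra.
    + simpl negb. simpl andb. destruct (Nat.leb (nchunks B) (k - 2)) eqn:Em.
      * destruct (prof_eqb B (clubp k j)) eqn:E2.
        { apply prof_eqb_spec in E2; subst. rewrite clubp_not_mid in Em by auto. discriminate. }
        simpl; lra.
      * assert (B = clubp k j). { apply club_char; auto. apply Nat.leb_nle in Em. auto. }
        subst. rewrite prof_eqb_refl. simpl; lra. Qed.

Lemma count_lack k x j : (2 <= k)%nat -> (j < k)%nat ->
  sig0 k x + Mj k x j + Qj k x j = nn k x - INR (Schunk k x j).
Proof. intros Hk Hj. unfold nn. rewrite Stot_w, Schunk_R, <- rsum_minus.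
  rewrite (rsum_ext _ (fun B => (if prof_eqb B (empty_prof k) then nv x B else 0) +
     ind (midb k B j) * nv x B + (if prof_eqb B (clubp k j) then nv x B else 0))).
  - rewrite !rsum_plus. rewrite (rsum_delta (allp k) (nv x) (empty_prof k) (allp_nodup k) (empty_in k)).
    rewrite (rsum_delta (allp k) (nv x) (clubp k j) (allp_nodup k) (clubp_in k j)).
    rewrite nv_empty by lia. unfold Mj, Qj. ring.
  - intros B HB. rewrite <- Rmult_minus_distr_r, (lack_partition k B j) by auto. unfold ind.
    destruct (prof_eqb B (empty_prof k)), (midb k B j), (prof_eqb B (clubp k j)); ring. Qed.

Lemma sum_lack k x : (1 <= k)%nat -> nn k x - 1 <= rsum (fun j => nn k x - INR (Schunk k x j)) (seq 0 k).
Proof. intros Hk. unfold nn.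
  rewrite (rsum_ext _ (fun j => rsum (fun B => (1 - ind (holds B j)) * nv x B) (allp k))).
  2:{ intros j _. rewrite Stot_w, Schunk_R, <- rsum_minus. apply rsum_ext; intros; ring. }
  rewrite rsum_swap.
  assert (E : INR (Stot k x) - 1 = rsum (fun B => (1 - ind (prof_eqb B (fullp k))) * nv x B) (allp k)).
  { rewrite (rsum_ext _ (fun B => 1 * nv x B - (if prof_eqb B (fullp k) then nv x B else 0))).
    rewrite rsum_minus, rsum_delta, <- Stot_w, full_npeers; auto using allp_nodup, fullp_in.
    intros B _. destruct (prof_eqb B (fullp k)); simpl; ring. }
  rewrite E. apply rsum_le. intros B HB. rewrite rsum_scalr. apply Rmult_le_compat_r. apply nv_nonneg.
  rewrite <- full_iff by auto. destruct (is_full B) eqn:Ef; simpl ind.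
  - rewrite Rminus_diag. apply rsum_nonneg. intros; destruct (holds B a); simpl; lra.
  - destruct (notfull_lacks k B HB Ef) as [j0 [Hj0 Hh]]. rewrite Rminus_0_r.
    apply Rle_trans with (1 - ind (holds B j0)); [rewrite Hh; simpl; lra|].
    apply (rsum_ge_term (fun j => 1 - ind (holds B j))). intros; destruct (holds B b); simpl; lra.
    apply in_seq; lia. Qed.

Lemma DS_le_full k g G : (forall A i, In A (allp k) -> is_full A = false -> In i (seq 0 k) -> holds A i = false ->
  g A i <= G A i) -> (forall A i, In A (allp k) -> In i (seq 0 k) -> 0 <= G A i) ->
  DS k g <= rsum (fun A => rsum (fun i => G A i) (seq 0 k)) (allp k).
Proof. intros H1 H2. unfold DS. apply rsum_le. intros A HA. destruct (is_full A) eqn:E.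
  - apply rsum_nonneg; auto.
  - apply rsum_le. intros i Hi. destruct (holds A i) eqn:E2; auto. Qed.

Lemma cube_exp s : 0 <= s -> s ^ 3 <= 27 * exp s.
Proof. intros Hs. replace s with (s/3 + s/3 + s/3) at 2 by field. rewrite !exp_plus.
  assert (H := exp_ineq1_le (s/3)). assert (0 <= s/3) by lra.
  replace (s ^ 3) with (27 * ((s/3) * (s/3) * (s/3))) by (field). 
  apply Rmult_le_compat_l; [lra|]. assert (s/3 <= exp (s/3)) by lra.
  apply Rmult_le_compat; try nra. Qed.

Lemma E2_bound k x : (2 <= k)%nat -> E2 k x <= 81 * INR k ^ 2 / nn k x.
Proof. intros Hk. assert (Hn := nn_pos k x).
  set (c := fun l => aa k x l * (3 * qq k x l ^ 2)).
  eapply Rle_trans.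
  { apply (DS_le_full k _ (fun A i => rsum (fun l => nv x A * ind (holds A l) * c l) (seq 0 k))).
    - intros A i HA HfA Hi HAi. apply in_seq in Hi.
      destruct (is_full (set_true A i)) eqn:Ef; simpl ind.
      + assert (EA : A = clubp k i) by (apply (set_true_full_club k A i); auto; lia). subst A.
        unfold rate. rewrite p_dl_club by lia. rewrite (nv_nonfull x _ HfA). rewrite Rmult_1_r.
        rewrite <- rsum_scal. apply rsum_le. intros l Hl. apply in_seq in Hl.
        unfold c. destruct (holds (clubp k i) l) eqn:Hh; simpl ind; [|lra].
        assert (H1 := p_last_up k x (clubp k i) i l ltac:(lia) Hh).
        assert (0 <= INR (x (clubp k i))) by apply pos_INR. assert (Ha := aa_nonneg k x l).
        assert (0 <= p_last k x (clubp k i) i) by apply p_last_nonneg.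
        assert (0 <= INR (x (clubp k i)) * aa k x l) by nra.
        replace (INR (x (clubp k i)) * p_last k x (clubp k i) i * (1 * aa k x l)) with
          ((INR (x (clubp k i)) * aa k x l) * p_last k x (clubp k i) i) by ring.
        replace (INR (x (clubp k i)) * 1 * (aa k x l * (3 * qq k x l ^ 2))) with
          ((INR (x (clubp k i)) * aa k x l) * (3 * qq k x l ^ 2)) by ring.
        apply Rmult_le_compat_l; auto.
      + rewrite Rmult_0_r, Rmult_0_l. apply rsum_nonneg. intros l _. unfold c.
        apply Rmult_le_pos; [apply Rmult_le_pos; [apply nv_nonneg| apply (proj1 (ind_0_1 _))]|].
        apply Rmult_le_pos; [apply aa_nonneg| nra].
    - intros A i _ _. apply rsum_nonneg. intros l _. unfold c.
      apply Rmult_le_pos; [apply Rmult_le_pos; [apply nv_nonneg| apply (proj1 (ind_0_1 _))]|].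
      apply Rmult_le_pos; [apply aa_nonneg| nra]. }
  rewrite (rsum_ext _ (fun A => INR k * rsum (fun l => nv x A * ind (holds A l) * c l) (seq 0 k))).
  2:{ intros A _. rewrite rsum_const, length_seq. ring. }
  rewrite rsum_scal, rsum_swap.
  rewrite (rsum_ext _ (fun l => c l * INR (Schunk k x l))).
  2:{ intros l _. rewrite Schunk_R, <- rsum_scal. apply rsum_ext; intros; ring. }
  assert (Hb : forall l, c l * INR (Schunk k x l) <= 81 / nn k x).
  { intros l. unfold c, aa, qq. set (s := INR (Schunk k x l)). set (n := nn k x).
    assert (Hs : 0 <= s) by apply pos_INR. assert (He := exp_pos s). assert (H3 := cube_exp s Hs).
    assert (Hn0 : n <> 0) by (apply Rgt_not_eq; exact Hn). assert (He0 : exp s <> 0) by (apply Rgt_not_eq; exact He).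
    replace (n / exp s * (3 * (s / n) ^ 2) * s) with (3 * s ^ 3 / (n * exp s)) by (field; auto).
    apply Rmult_le_reg_r with (n * exp s). apply Rmult_lt_0_compat; [exact Hn|exact He]. unfold Rdiv.
    rewrite Rmult_assoc, Rinv_l by (apply Rmult_integral_contrapositive; auto).
    replace (81 * / n * (n * exp s)) with (81 * exp s) by (field; auto). lra. }
  assert (rsum (fun l => c l * INR (Schunk k x l)) (seq 0 k) <= INR k * (81 / nn k x)).
  { replace (INR k) with (INR (length (seq 0 k))) by (rewrite length_seq; auto).
    rewrite <- rsum_const. apply rsum_le; auto. }
  assert (0 <= INR k) by apply pos_INR.
  replace (81 * INR k ^ 2 / nn k x) with (INR k * (INR k * (81 / nn k x))) by (field; lra).
  apply Rmult_le_compat_l; auto. Qed.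


Lemma e_lo : 2.56 <= exp 1.
Proof. assert (E : exp 1 = exp (1/8) ^ 8).
  { replace 1 with (1/8 + 1/8 + 1/8 + 1/8 + 1/8 + 1/8 + 1/8 + 1/8) at 1 by field.
    rewrite !exp_plus. simpl. ring. }
  rewrite E. assert (H := exp_ineq1_le (1/8)).
  apply Rle_trans with ((1 + 1/8) ^ 8). simpl; lra. apply pow_incr. lra. Qed.

Lemma poly79 a b c u : 0 <= a -> 0 <= b -> 0 <= c -> u = a + b + c -> u <= 1 ->
  (7/9) * u ^ 3 <= a + 3 * u ^ 2 * b + 3 * c ^ 3.
Proof. intros Ha Hb Hc Hu H1.
  assert (0 <= u) by lra.
  assert (Hu2 : u^2 <= 1) by (rewrite <- (pow1 2); apply pow_incr; lra).
  assert (Hu3 : 0 <= u^2) by (apply pow_le; lra).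
  assert (0 <= a * (1 - u^2)) by (apply Rmult_le_pos; lra).
  assert (0 <= b * (2 * u^2)) by (apply Rmult_le_pos; lra).
  assert (2 * u^3 / 9 - u^2 * c + 3 * c^3 = (3*c - u)^2 * (c/3 + 2*u/9)) by (field).
  assert (0 <= (3*c - u)^2 * (c/3 + 2*u/9)) by (apply Rmult_le_pos; [apply pow2_ge_0| lra]).
  assert (u^2 * (a + b) = u^2 * (u - c)) by (subst; ring).
  lra. Qed.

Lemma qq_bounds k x j : 0 <= qq k x j <= 1.
Proof. unfold qq. assert (Hn := nn_pos k x). split. apply div_nonneg; auto. apply pos_INR.
  apply Rmult_le_reg_r with (nn k x); auto. unfold Rdiv. rewrite Rmult_assoc, Rinv_l by lra.
  rewrite Rmult_1_r, Rmult_1_l. unfold nn. rewrite Schunk_R, Stot_w. apply rsum_le. intros B _.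
  assert (H := nv_nonneg x B). destruct (holds B j); simpl; lra. Qed.

Lemma Schunk_ge1 k x j : (j < k)%nat -> 1 <= INR (Schunk k x j).
Proof. intros Hj. rewrite Schunk_R. apply Rle_trans with (ind (holds (fullp k) j) * nv x (fullp k)).
  rewrite holds_fullp, full_npeers by auto. simpl; lra.
  apply (rsum_ge_term (fun B => ind (holds B j) * nv x B)). intros. apply Rmult_le_pos. apply ind_0_1. apply nv_nonneg.
  apply fullp_in. Qed.

Lemma sig0_nonneg k x : 0 <= sig0 k x.
Proof. apply pos_INR. Qed.
Lemma P0_nonneg k x : 0 <= P0 k x.
Proof. apply rsum_nonneg. intros; apply p_empty_nonneg. Qed.
Lemma Rne_nonneg k x : 0 <= Rne k x.
Proof. apply DS_nonneg. intros. apply Rmult_le_pos. destruct (prof_eqb _ _); simpl; lra. apply rate_nonneg. Qed.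
Lemma Ne_nonneg k x : 0 <= Ne k x.
Proof. unfold Ne. apply Rmult_le_pos. apply sig0_nonneg. apply rsum_nonneg. intros.
  apply Rmult_le_pos. apply p_empty_nonneg. apply aa_nonneg. Qed.
Lemma Mj_nonneg k x j : 0 <= Mj k x j.
Proof. apply rsum_nonneg. intros. apply Rmult_le_pos. apply ind_0_1. apply nv_nonneg. Qed.
Lemma Qj_nonneg k x j : 0 <= Qj k x j.
Proof. apply nv_nonneg. Qed.


Lemma div_le_l a b n : 0 < n -> a <= b * n -> a / n <= b.
Proof. intros Hn H. apply Rmult_le_reg_r with n; auto. unfold Rdiv. rewrite Rmult_assoc, Rinv_l by lra. lra. Qed.

Lemma Cconst_eq k : Cconst k = 108 * exp 1 * INR k ^ 3.
Proof. reflexivity. Qed.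

Lemma P1_lemma k lam x : (2 <= k)%nat -> 1 <= 3 * INR k * lam -> 2592 * INR k <= nn k x ->
  (exp 1 - 1) * a0 k x * (sig0 k x * P0 k x) <= lam * (1 - / exp 1) * a0 k x / 2 + Cconst k / 2 * Rne k x + 1.
Proof. intros Hk Hl Hn.
  assert (He := e_lo). assert (He3 := exp1_le3).
  assert (Hkr : 2 <= INR k) by (replace 2 with (INR 2) by (simpl; lra); apply le_INR; auto).
  assert (Hlam : 0 < lam) by nra.
  assert (HC : Cconst k = 108 * exp 1 * INR k ^ 3) by reflexivity.
  assert (HCp : 0 <= Cconst k) by (rewrite HC; assert (0 <= INR k ^ 3) by (apply pow_le; lra); nra).
  assert (Hnp := nn_pos k x). assert (Hsg := sig0_nonneg k x). assert (HP0 := P0_nonneg k x).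
  assert (Ha0 := a0_nonneg k x). assert (HRne := Rne_nonneg k x).
  destruct (rsum_max_ex (fun i => 3 * qq k x i * (1 - qq k x i) ^ 2) k ltac:(lia)) as [i0 [Hi0 Hmax]].
  apply in_seq in Hi0.
  assert (HP : P0 k x <= INR k * (3 * qq k x i0 * (1 - qq k x i0) ^ 2)) by (eapply Rle_trans; [apply P0_up| exact Hmax]).
  set (q := qq k x i0) in *. set (u := 1 - q) in *. assert (Hq := qq_bounds k x i0). fold q in Hq.
  assert (Hu : 0 <= u <= 1) by (unfold u; lra).
  assert (HPu : P0 k x <= 3 * INR k * u ^ 2).
  { eapply Rle_trans; [exact HP|]. assert (0 <= u^2) by (apply pow_le; lra).
    replace (3 * INR k * u ^ 2) with (INR k * (3 * 1 * u ^ 2)) by ring.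
    apply Rmult_le_compat_l; [lra|]. apply Rmult_le_compat_r; lra. }
  assert (Hcnt := count_lack k x i0 Hk ltac:(lia)).
  assert (Hs : INR (Schunk k x i0) = q * nn k x) by (unfold q, qq; field; lra).
  rewrite Hs in Hcnt.
  assert (HRlo := Rne_lo k x i0 Hk ltac:(lia)). fold q in HRlo.
  set (n := nn k x) in *. set (sg := sig0 k x) in *. set (P := P0 k x) in *.
  set (M := Mj k x i0) in *. set (Q := Qj k x i0) in *.
  assert (HM := Mj_nonneg k x i0). assert (HQ := Qj_nonneg k x i0). fold M Q in HM, HQ.
  assert (Ha0e : a0 k x = n / exp sg) by reflexivity.
  destruct (Rle_dec (sg * P) (lam / (2 * exp 1))) as [Hc1|Hc1].
  - (* small rare rate *)
    assert ((exp 1 - 1) * a0 k x * (sg * P) <= (exp 1 - 1) * a0 k x * (lam / (2 * exp 1))).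
    { apply Rmult_le_compat_l; auto. apply Rmult_le_pos; lra. }
    assert ((exp 1 - 1) * a0 k x * (lam / (2 * exp 1)) = lam * (1 - / exp 1) * a0 k x / 2) by (field; lra).
    assert (0 <= Cconst k / 2 * Rne k x) by (apply Rmult_le_pos; lra). lra.
  - apply Rnot_le_lt in Hc1.
    assert (Hsgp : 0 < sg).
    { destruct (Rle_lt_dec sg 0); auto. assert (sg = 0) by lra. rewrite H in Hc1.
      assert (0 < lam / (2 * exp 1)) by (apply Rdiv_lt_0_compat; lra). lra. }
    set (E := exp sg) in *. assert (HE : 0 < E) by apply exp_pos.
    assert (HE3 : sg ^ 3 <= 27 * E) by (apply cube_exp; lra).
    destruct (Rle_dec (n * u) (4 * sg)) as [Hc2|Hc2].
    + (* many empty peers *)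
      assert (Hu4 : u <= 4 * sg / n) by (apply Rmult_le_reg_l with n; auto; unfold Rdiv; field_simplify; lra).
      assert (Hu2 : u ^ 2 <= (4 * sg / n) ^ 2) by (apply pow_incr; lra).
      assert (HP2 : P <= 48 * INR k * sg ^ 2 / n ^ 2).
      { eapply Rle_trans; [exact HPu|]. replace (48 * INR k * sg ^ 2 / n ^ 2) with (3 * INR k * (4 * sg / n) ^ 2)
          by (field; lra). apply Rmult_le_compat_l; lra. }
      assert (Hstep : (exp 1 - 1) * a0 k x * (sg * P) <= (exp 1 - 1) * (n / E) * (sg * (48 * INR k * sg ^ 2 / n ^ 2))).
      { rewrite Ha0e. apply Rmult_le_compat_l. apply Rmult_le_pos; [lra| apply div_nonneg; lra].
        apply Rmult_le_compat_l; lra. }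
      assert (Heq : (exp 1 - 1) * (n / E) * (sg * (48 * INR k * sg ^ 2 / n ^ 2)) =
        48 * (exp 1 - 1) * INR k * (sg ^ 3 / E) / n) by (field; lra).
      assert (Hs3 : sg ^ 3 / E <= 27) by (apply Rmult_le_reg_r with E; auto; unfold Rdiv;
        rewrite Rmult_assoc, Rinv_l by lra; lra).
      assert (48 * (exp 1 - 1) * INR k * (sg ^ 3 / E) <= 2592 * INR k).
      { assert (0 <= sg ^ 3 / E) by (apply div_nonneg; [apply pow_le; lra| lra]).
        assert (0 <= 48 * (exp 1 - 1) * INR k) by nra. nra. }
      assert (48 * (exp 1 - 1) * INR k * (sg ^ 3 / E) / n <= 1).
      { apply Rmult_le_reg_r with n; auto. unfold Rdiv. rewrite Rmult_assoc, Rinv_l by lra. lra. }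
      assert (0 <= Cconst k / 2 * Rne k x) by (apply Rmult_le_pos; lra).
      assert (0 <= lam * (1 - / exp 1) * a0 k x / 2).
      { assert (Hie := inv_e_bounds). apply Rmult_le_pos; [|lra]. apply Rmult_le_pos; [|lra]. apply Rmult_le_pos; lra. }
      lra.
    + apply Rnot_le_lt in Hc2.
      set (a := M / n). set (c := Q / n). set (t := a + c).
      assert (Ha : 0 <= a) by (apply div_nonneg; lra). assert (Hc : 0 <= c) by (apply div_nonneg; lra).
      assert (HMQ : M + Q = n * u - sg) by (unfold u; lra).
      assert (Ht : t = u - sg / n) by (unfold t, a, c; apply Rmult_eq_reg_r with n; [|lra];
        unfold Rdiv; field_simplify; [lra| lra| lra]).
      assert (Hsn : 0 <= sg / n) by (apply div_nonneg; lra).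
      assert (Hsn2 : sg / n <= u / 4) by (apply div_le_l; lra).
      assert (Htu : t <= u) by lra.
      assert (Htu2 : 3 * u / 4 <= t) by lra.
      assert (Hpoly := poly79 a 0 c t Ha ltac:(lra) Hc ltac:(unfold t; ring) ltac:(lra)).
      assert (HRa : q * M + 3 * q * Q ^ 3 / n ^ 2 = q * n * (a + 3 * t ^ 2 * 0 + 3 * c ^ 3)) by (unfold a, c; field; lra).
      assert (Ht3 : (3 * u / 4) ^ 3 <= t ^ 3) by (apply pow_incr; lra).
      assert (HqN : 0 <= q * n) by nra.
      assert (HRne2 : 21 / 64 * (q * n) * u ^ 3 <= Rne k x).
      { eapply Rle_trans; [|exact HRlo]. rewrite HRa.
        apply Rle_trans with (q * n * (7 / 9 * t ^ 3)); [|apply Rmult_le_compat_l; auto].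
        replace (21 / 64 * (q * n) * u ^ 3) with (q * n * (7 / 9 * ((3 * u / 4) ^ 3))) by field.
        apply Rmult_le_compat_l; auto. lra. }
      assert (HPq : P <= 3 * INR k * q * u ^ 2) by (eapply Rle_trans; [exact HP| right; ring]).
      set (X := (exp 1 - 1) * sg * 3 * INR k / E).
      set (Y := 21 * Cconst k / 128 * u).
      assert (HX : 0 <= X) by (unfold X; apply div_nonneg; [|lra]; assert (0 <= exp 1 - 1) by lra;
        apply Rmult_le_pos; [apply Rmult_le_pos; [apply Rmult_le_pos|]|]; lra).
      assert (HY : 0 <= Y) by (unfold Y; apply Rmult_le_pos; [apply div_nonneg|]; lra).
      assert (Hu2lo : lam / (2 * exp 1) < sg * (3 * INR k * u ^ 2)).
      { eapply Rlt_le_trans; [exact Hc1|]. apply Rmult_le_compat_l; lra. }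
      assert (HE2 : 8 * sg ^ 3 <= 27 * (E * E)).
      { assert (H2 := cube_exp (2 * sg) ltac:(lra)). replace (2 * sg) with (sg + sg) in H2 by ring.
        rewrite exp_plus in H2. fold E in H2. replace ((sg + sg) ^ 3) with (8 * sg ^ 3) in H2 by ring. exact H2. }
      assert (HXY : X <= Y).
      { assert (HX2 : X ^ 2 * (6 * exp 1 * INR k * sg) <= 182.25 * (exp 1 - 1) ^ 2 * exp 1 * INR k ^ 3).
        { unfold X. replace (((exp 1 - 1) * sg * 3 * INR k / E) ^ 2 * (6 * exp 1 * INR k * sg))
            with (54 * (exp 1 - 1) ^ 2 * exp 1 * INR k ^ 3 * (sg ^ 3 / (E * E))) by (field; lra).
          assert (sg ^ 3 / (E * E) <= 27 / 8).
          { apply div_le_l; [nra| lra]. }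
          assert (0 <= 54 * (exp 1 - 1) ^ 2 * exp 1 * INR k ^ 3).
          { assert (0 <= INR k ^ 3) by (apply pow_le; lra). assert (0 <= (exp 1 - 1)^2) by apply pow2_ge_0. nra. }
          nra. }
        assert (HYb : 182.25 * (exp 1 - 1) ^ 2 * exp 1 * INR k ^ 3 <= (21 * Cconst k / 128) ^ 2 * lam).
        { rewrite HC.
          replace ((21 * (108 * exp 1 * INR k ^ 3) / 128) ^ 2 * lam) with
            ((21 * 108 / 128) ^ 2 * exp 1 ^ 2 * INR k ^ 5 * (INR k * lam)) by field.
          assert (Hkl : 1 / 3 <= INR k * lam) by lra.
          assert (Hk3 : 8 <= INR k ^ 3) by (replace 8 with (2 ^ 3) by ring; apply pow_incr; lra).
          assert (Hk6 : INR k ^ 3 * 4 <= INR k ^ 5) by (replace (INR k ^ 5) with (INR k ^ 3 * (INR k * INR k)) by ring; apply Rmult_le_compat_l; nra).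
          assert (He1 : (exp 1 - 1) ^ 2 <= 4) by nra.
          assert (Hpos : 0 <= (21 * 108 / 128) ^ 2 * exp 1 ^ 2 * INR k ^ 5) by (assert (0 <= INR k ^ 5) by (apply pow_le; lra); nra).
          apply Rle_trans with ((21 * 108 / 128) ^ 2 * exp 1 ^ 2 * INR k ^ 5 * (1/3)); [|apply Rmult_le_compat_l; lra].
          assert (182.25 * (exp 1 - 1) ^ 2 * exp 1 * INR k ^ 3 <= 729 * exp 1 * INR k ^ 3).
          { assert (0 <= exp 1 * INR k ^ 3) by nra. nra. }
          assert (729 * exp 1 * INR k ^ 3 <= (21 * 108 / 128) ^ 2 * exp 1 ^ 2 * (INR k ^ 3 * 4) * (1 / 3)).
          { assert (0 <= exp 1 * INR k ^ 3) by nra. nra. }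
          assert ((21 * 108 / 128) ^ 2 * exp 1 ^ 2 * (INR k ^ 3 * 4) * (1 / 3) <=
             (21 * 108 / 128) ^ 2 * exp 1 ^ 2 * INR k ^ 5 * (1 / 3)).
          { assert (0 <= (21 * 108 / 128) ^ 2 * exp 1 ^ 2) by nra. nra. }
          lra. }
        assert (Hsk : 0 < 6 * exp 1 * INR k * sg) by (repeat apply Rmult_lt_0_compat; lra).
        assert (HYY : (21 * Cconst k / 128) ^ 2 * lam < Y ^ 2 * (6 * exp 1 * INR k * sg)).
        { unfold Y. replace ((21 * Cconst k / 128 * u) ^ 2 * (6 * exp 1 * INR k * sg)) with
            ((21 * Cconst k / 128) ^ 2 * (sg * (3 * INR k * u ^ 2) * (2 * exp 1))) by ring.
          apply Rmult_lt_compat_l.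
          { apply pow_lt. rewrite HC. assert (0 < INR k ^ 3) by (apply pow_lt; lra). unfold Rdiv.
            repeat apply Rmult_lt_0_compat; try lra; try (apply Rinv_0_lt_compat; lra). }
          replace lam with (lam / (2 * exp 1) * (2 * exp 1)) at 1 by (field; lra).
          apply Rmult_lt_compat_r; lra. }
        assert (X ^ 2 < Y ^ 2) by (apply Rmult_lt_reg_r with (6 * exp 1 * INR k * sg); auto; lra).
        nra. }
      assert (Hfin : (exp 1 - 1) * a0 k x * (sg * P) <= n * q * u ^ 2 * X).
      { rewrite Ha0e. unfold X. replace (n * q * u ^ 2 * ((exp 1 - 1) * sg * 3 * INR k / E)) with
          ((exp 1 - 1) * (n / E) * (sg * (3 * INR k * q * u ^ 2))) by (field; lra).
        apply Rmult_le_compat_l. apply Rmult_le_pos; [lra| apply div_nonneg; lra]. apply Rmult_le_compat_l; lra. }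
      assert (n * q * u ^ 2 * X <= n * q * u ^ 2 * Y) by (apply Rmult_le_compat_l; auto; assert (0 <= u^2) by (apply pow_le; lra); nra).
      assert (n * q * u ^ 2 * Y = Cconst k / 2 * (21 / 64 * (q * n) * u ^ 3)) by (unfold Y; field).
      assert (Cconst k / 2 * (21 / 64 * (q * n) * u ^ 3) <= Cconst k / 2 * Rne k x) by (apply Rmult_le_compat_l; lra).
      assert (0 <= lam * (1 - / exp 1) * a0 k x / 2).
      { assert (Hie := inv_e_bounds). apply Rmult_le_pos; [|lra]. apply Rmult_le_pos; [|lra]. apply Rmult_le_pos; lra. }
      lra.
Qed.


Ltac fnz := repeat split; try (apply Rgt_not_eq; lra); try (apply Rlt_not_eq; lra); try lra.

Lemma drift_main k lam x : (2 <= k)%nat -> 1 <= 3 * INR k * lam -> 2592 * INR k <= nn k x ->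
  162 * INR k ^ 2 <= nn k x ->
  drift k lam (Lyap k) x <= lam * (Cconst k * INR k + INR k + 1) + 2 - lam * (1 - / exp 1) * a0 k x / 2
    - Cconst k / 2 * Rtot k x - (1 - / exp 1) * Ne k x.
Proof. intros Hk Hl Hn1 Hn2.
  assert (He := e_lo). assert (He3 := exp1_le3).
  assert (Hkr : 2 <= INR k) by (replace 2 with (INR 2) by (simpl; lra); apply le_INR; auto).
  assert (Hlam : 0 < lam) by nra.
  assert (HCp : 0 <= Cconst k) by (unfold Cconst; assert (0 <= INR k ^ 3) by (apply pow_le; lra); nra).
  assert (H1 := drift_bound k lam x Hk ltac:(lra)).
  rewrite DS_Bd in H1 by lia.
  rewrite Rtot_split in H1 by lia.
  assert (H2 := P1_lemma k lam x Hk Hl Hn1).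
  assert (H3 := E2_bound k x Hk).
  assert (Hnp := nn_pos k x).
  assert (H4 : (exp 1 - 1) * E2 k x <= 1).
  { assert (81 * INR k ^ 2 / nn k x <= 1 / 2) by (apply div_le_l; lra).
    assert (0 <= E2 k x).
    { apply DS_nonneg. intros. apply Rmult_le_pos; [apply Rmult_le_pos; [apply rate_nonneg| apply ind_0_1]|].
      apply rsum_nonneg. intros. apply Rmult_le_pos; [apply ind_0_1| apply aa_nonneg]. }
    nra. }
  rewrite (Rtot_split k x) by lia.
  assert (Hs := Rmult_le_pos _ _ (sig0_nonneg k x) (P0_nonneg k x)).
  assert (HR := Rne_nonneg k x).
  assert (0 <= Cconst k * (sig0 k x * P0 k x)) by (apply Rmult_le_pos; auto).
  lra. Qed.

Theorem theorem3 (k : nat) (lam : R) :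
  (2 <= k)%nat -> lam >= 1 / (3 * INR k) ->
  exists eps : R, eps > 0 /\
    forall x : state,
      INR (Stot k x) > 4 * Cconst k * INR k *
                       exp (3 * Cconst k * lam * INR k ^ 2 * exp (6 * lam * INR k ^ 4)) ->
      drift k lam (Lyap k) x < - eps.
Proof.
  intros Hk Hlam0. exists (1/2). split; [lra|]. intros x Hn.
  assert (He := e_lo). assert (He3 := exp1_le3). assert (Hie := inv_e_bounds).
  assert (Hkr : 2 <= INR k) by (replace 2 with (INR 2) by (simpl; lra); apply le_INR; auto).
  assert (Hl : 1 <= 3 * INR k * lam).
  { assert (0 < 3 * INR k) by lra. unfold Rdiv in Hlam0. rewrite Rmult_1_l in Hlam0.
    apply Rge_le in Hlam0. apply Rmult_le_compat_l with (r := 3 * INR k) in Hlam0; [|lra].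
    rewrite Rinv_r in Hlam0 by lra. lra. }
  assert (Hlam : 0 < lam) by nra.
  set (C := Cconst k) in *. assert (HC : C = 108 * exp 1 * INR k ^ 3) by reflexivity.
  assert (Hk3 : 8 <= INR k ^ 3) by (replace 8 with (2 ^ 3) by ring; apply pow_incr; lra).
  assert (HCb : 2211 <= C) by (rewrite HC; nra).
  set (L := C * INR k * lam).
  assert (HL : 737 <= L).
  { unfold L. assert (L0 : C * INR k * lam = 36 * exp 1 * INR k ^ 3 * (3 * INR k * lam)) by (rewrite HC; ring).
    rewrite L0. assert (0 <= 36 * exp 1 * INR k ^ 3) by nra. nra. }
  assert (HK : lam * (C * INR k + INR k + 1) + 3 <= (101/100) * L).
  { unfold L. assert (lam * (INR k + 1) <= (1/200) * (C * INR k * lam)).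
    { assert (INR k + 1 <= (1/200) * C * INR k) by nra. nra. }
    assert (3 <= (1/200) * (C * INR k * lam)) by (fold L; lra). nra. }
  set (M1 := 6 * lam * INR k ^ 4) in *.
  set (Z := 3 * C * lam * INR k ^ 2 * exp M1) in *.
  set (n := INR (Stot k x)) in *.
  assert (HM1 : 0 <= M1) by (unfold M1; assert (0 <= INR k ^ 4) by (apply pow_le; lra); nra).
  assert (HeZ : 1 + Z <= exp Z) by apply exp_ineq1_le.
  assert (HeM : 1 + M1 <= exp M1) by apply exp_ineq1_le.
  assert (Hk2 : 0 <= INR k ^ 2) by (apply pow_le; lra).
  assert (H3C : 0 <= 3 * C * lam * INR k ^ 2) by (repeat apply Rmult_le_pos; lra).
  assert (HZ0 : 0 <= Z) by (unfold Z; apply Rmult_le_pos; [lra| left; apply exp_pos]).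
  assert (H4Ck : 4 * C * INR k >= 8844) by nra.
  assert (Hn0 : 4 * C * INR k <= n).
  { assert (4 * C * INR k * 1 <= 4 * C * INR k * exp Z) by (apply Rmult_le_compat_l; nra). lra. }
  assert (HnZ : Z < n).
  { assert (exp Z <= 4 * C * INR k * exp Z) by (assert (0 < exp Z) by apply exp_pos; nra). lra. }
  assert (Hn1 : 2592 * INR k <= n) by nra.
  assert (Hn2 : 162 * INR k ^ 2 <= n).
  { rewrite HC in Hn0. assert (INR k ^ 2 <= INR k ^ 4) by (replace (INR k ^ 4) with (INR k ^ 2 * INR k ^ 2) by ring; nra).
    assert (4 * (108 * exp 1 * INR k ^ 3) * INR k = 432 * exp 1 * INR k ^ 4) by ring. nra. }
  assert (Hn3 : 2 * M1 <= n).
  { assert (Z >= 3 * C * lam * INR k ^ 2 * (1 + M1)).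
    { unfold Z. apply Rle_ge. apply Rmult_le_compat_l; lra. }
    assert (3 * C * lam * INR k ^ 2 >= 2) by nra. nra. }
  assert (Hmain := drift_main k lam x Hk Hl Hn1 Hn2). fold C n in Hmain.
  assert (HNe := Ne_nonneg k x). assert (HRt : 0 <= Rtot k x) by (rewrite Rtot_split by lia;
    assert (Hs := Rmult_le_pos _ _ (sig0_nonneg k x) (P0_nonneg k x)); assert (HR := Rne_nonneg k x); lra).
  assert (Ha0 := a0_nonneg k x).
  assert (Hfinal : drift k lam (Lyap k) x <= -1); [|lra].
  destruct (Rle_dec (lam * (C * INR k + INR k + 1) + 3) (lam * (1 - / exp 1) * a0 k x / 2)) as [Ca|Ca].
  { assert (0 <= C / 2 * Rtot k x) by (apply Rmult_le_pos; lra).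
    assert (0 <= (1 - / exp 1) * Ne k x) by (apply Rmult_le_pos; lra). lra. }
  apply Rnot_le_lt in Ca.
  (* many empty peers *)
  assert (Hie2 : 1 - / exp 1 >= (3/5)).
  { assert (/ exp 1 <= / 2.56) by (apply Rinv_le_contravar; lra). lra. }
  assert (Ha0b : a0 k x < 4 * C * INR k).
  { destruct (Rlt_le_dec (a0 k x) (4 * C * INR k)) as [h|h]; auto. exfalso.
    assert (lam * (1 - / exp 1) * a0 k x / 2 >= lam * (3/5) * (4 * C * INR k) / 2).
    { apply Rle_ge. unfold Rdiv. apply Rmult_le_compat_r; [lra|]. apply Rmult_le_compat; nra. }
    assert (lam * (3/5) * (4 * C * INR k) / 2 = (6/5) * L) by (unfold L; lra). lra. }
  set (sg := sig0 k x) in *.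
  assert (HsgZ : Z < sg).
  { assert (Ha0e : a0 k x = n / exp sg) by reflexivity.
    assert (n < 4 * C * INR k * exp sg).
    { rewrite Ha0e in Ha0b. assert (0 < exp sg) by apply exp_pos.
      apply Rmult_lt_compat_r with (r := exp sg) in Ha0b; auto. unfold Rdiv in Ha0b.
      rewrite Rmult_assoc, Rinv_l, Rmult_1_r in Ha0b by lra. lra. }
    assert (exp Z < exp sg).
    { assert (0 < 4 * C * INR k) by lra. apply Rmult_lt_reg_l with (4 * C * INR k); auto. lra. }
    apply exp_lt_inv; auto. }
  assert (Hsg0 : 0 <= sg) by apply sig0_nonneg.
  assert (HexpM : 0 < exp M1) by apply exp_pos.
  assert (HZe : Z = 3 * L * INR k * exp M1) by (unfold Z, L; ring).
  destruct (classic (exists j, (j < k)%nat /\ INR (Schunk k x j) <= M1)) as [[j [Hj Hsj]]|Hall].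
  - (* a rare chunk *)
    set (s := INR (Schunk k x j)) in *.
    assert (Hs1 : 1 <= s) by apply Schunk_ge1, Hj.
    assert (Hq : qq k x j = s / n) by reflexivity.
    assert (Hpe := p_empty_lo k x j ltac:(lia) Hj).
    assert (HNe1 : sg * (p_empty k x j * aa k x j) <= Ne k x).
    { unfold Ne. fold sg. apply Rmult_le_compat_l; auto.
      apply (rsum_ge_term (fun i => p_empty k x i * aa k x i)).
      intros; apply Rmult_le_pos; [apply p_empty_nonneg| apply aa_nonneg]. apply in_seq; lia. }
    assert (Haa : aa k x j = n / exp s) by reflexivity.
    assert (Hexps : exp s <= exp M1).
    { destruct (Rle_lt_or_eq_dec _ _ Hsj) as [h|h]; [left; apply exp_increasing; auto| rewrite h; lra]. }
    assert (Hesp : 0 < exp s) by apply exp_pos.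
    assert (Hqh : s / n <= 1 / 2) by (apply div_le_l; lra).
    assert (Hq0 : 0 <= s / n) by (apply div_nonneg; lra).
    assert (H1q : 1 / 4 <= (1 - s / n) ^ 2) by nra.
    assert (Hpa : 3 / (4 * INR k * exp M1) <= p_empty k x j * aa k x j).
    { eapply Rle_trans; [|apply Rmult_le_compat_r; [apply aa_nonneg| exact Hpe]].
      rewrite Hq, Haa.
      replace (3 * (s / n) * (1 - s / n) ^ 2 / INR k * (n / exp s)) with (3 * s * (1 - s / n) ^ 2 / (INR k * exp s))
        by (field; fnz).
      unfold Rdiv. apply Rle_trans with (3 * 1 * (1/4) * / (INR k * exp M1)).
      { right. field. split; lra. }
      apply Rmult_le_compat.
      - lra.
      - left. apply Rinv_0_lt_compat. nra.
      - assert (0 <= 3 * s) by lra. nra.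
      - apply Rinv_le_contravar. nra. apply Rmult_le_compat_l; lra. }
    assert (HNe2 : sg * (3 / (4 * INR k * exp M1)) <= Ne k x).
    { eapply Rle_trans; [|exact HNe1]. apply Rmult_le_compat_l; auto. }
    assert (HNe3 : (9/4) * L < sg * (3 / (4 * INR k * exp M1))).
    { replace ((9/4) * L) with (Z * (3 / (4 * INR k * exp M1))) by (rewrite HZe; field; fnz).
      apply Rmult_lt_compat_r; auto. apply Rdiv_lt_0_compat. lra. repeat apply Rmult_lt_0_compat; lra. }
    assert (HNe4 : 27 / 20 * L <= (1 - / exp 1) * Ne k x).
    { assert (3 / 5 * Ne k x <= (1 - / exp 1) * Ne k x) by (apply Rmult_le_compat_r; lra). lra. }
    assert (0 <= C / 2 * Rtot k x) by (apply Rmult_le_pos; [apply div_nonneg|]; lra).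
    assert (0 <= lam * (1 - / exp 1) * a0 k x / 2) by (apply div_nonneg; [apply Rmult_le_pos; [apply Rmult_le_pos|]| ]; lra).
    lra.
  - (* all chunks common *)
    assert (Hall' : forall j, (j < k)%nat -> M1 < INR (Schunk k x j)).
    { intros j Hj. destruct (Rlt_le_dec M1 (INR (Schunk k x j))); auto. exfalso; apply Hall; eauto. }
    destruct (rsum_max_ex (fun j => nn k x - INR (Schunk k x j)) k ltac:(lia)) as [j [Hj Hmax]].
    apply in_seq in Hj.
    assert (Hsum := sum_lack k x ltac:(lia)).
    change (nn k x) with n in Hmax, Hsum.
    set (s := INR (Schunk k x j)) in *.
    assert (Hsj := Hall' j ltac:(lia)). fold s in Hsj.
    set (q := qq k x j). assert (Hq : q = s / n) by reflexivity.
    set (u := 1 - q).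
    assert (Hqn : q * n = s) by (rewrite Hq; field; lra).
    assert (Hqb := qq_bounds k x j). fold q in Hqb.
    assert (Hcnt := count_lack k x j Hk ltac:(lia)). change (nn k x) with n in Hcnt. fold sg s in Hcnt.
    set (M := Mj k x j) in *. set (Q := Qj k x j) in *.
    assert (HM := Mj_nonneg k x j). assert (HQ := Qj_nonneg k x j). fold M Q in HM, HQ.
    assert (HRlo := Rne_lo k x j Hk ltac:(lia)). fold q M Q in HRlo. unfold nn in HRlo. fold n in HRlo.
    assert (HP0 := P0_lo k x j ltac:(lia)). fold q in HP0.
    assert (HRs : Rtot k x = sg * P0 k x + Rne k x) by (apply Rtot_split; lia).
    set (a := M / n). set (b := sg / n). set (c := Q / n).
    assert (Ha : 0 <= a) by (apply div_nonneg; lra). assert (Hb : 0 <= b) by (apply div_nonneg; lra).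
    assert (Hc : 0 <= c) by (apply div_nonneg; lra).
    assert (Habc : a + b + c = (sg + M + Q) / n) by (unfold a, b, c; field; fnz).
    rewrite Hcnt in Habc.
    assert (Hu : u = a + b + c). { rewrite Habc; unfold u; rewrite Hq. change (nn k x) with n. field; fnz. }
    assert (Hu1 : u <= 1) by (unfold u; lra).
    assert (Hpoly := poly79 a b c u Ha Hb Hc Hu Hu1).
    assert (HR1 : q * n * (7 / 9 * u ^ 3) <= Rtot k x).
    { rewrite HRs. apply Rle_trans with (sg * (3 * q * u ^ 2) + (q * M + 3 * q * Q ^ 3 / n ^ 2)).
      - replace (sg * (3 * q * u ^ 2) + (q * M + 3 * q * Q ^ 3 / n ^ 2)) with (q * n * (a + 3 * u ^ 2 * b + 3 * c ^ 3))
          by (unfold a, b, c; field; lra).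
        apply Rmult_le_compat_l; [nra| lra].
      - apply Rplus_le_compat; auto. apply Rmult_le_compat_l; auto. }
    assert (Hku : (99/100) <= INR k * u).
    { assert (Hu' : u = (n - s) / n) by (unfold u; rewrite Hq; field; lra).
      assert (n - 1 <= INR k * (n - s)) by lra.
      rewrite Hu'. apply Rmult_le_reg_r with n; [lra|]. unfold Rdiv.
      replace (INR k * ((n - s) * / n) * n) with (INR k * (n - s)) by (field; lra). nra. }
    assert (Hku3 : (97/100) <= (INR k * u) ^ 3).
    { apply Rle_trans with ((99/100) ^ 3). simpl; lra. apply pow_incr; lra. }
    assert (Hu0 : 0 <= u) by (unfold u; lra).
    assert (HR2 : (9/2) * lam * INR k <= Rtot k x).
    { eapply Rle_trans; [|exact HR1]. rewrite Hqn.
      apply Rle_trans with (M1 * (7 / 9 * u ^ 3)).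
      - unfold M1. replace (6 * lam * INR k ^ 4 * (7 / 9 * u ^ 3)) with (14 / 3 * lam * INR k * (INR k * u) ^ 3) by field.
        assert (0 <= 14 / 3 * lam * INR k) by nra. nra.
      - apply Rmult_le_compat_r; [|lra]. assert (0 <= u ^ 3) by (apply pow_le; lra). lra. }
    assert (HR3 : (9/4) * L <= C / 2 * Rtot k x).
    { unfold L. assert (C / 2 * ((9/2) * lam * INR k) = (9/4) * (C * INR k * lam)) by field.
      assert (C / 2 * ((9/2) * lam * INR k) <= C / 2 * Rtot k x) by (apply Rmult_le_compat_l; lra). lra. }
    assert (0 <= (1 - / exp 1) * Ne k x) by (apply Rmult_le_pos; lra).
    assert (0 <= lam * (1 - / exp 1) * a0 k x / 2) by (apply div_nonneg; [apply Rmult_le_pos; [apply Rmult_le_pos|]| ]; lra).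
    lra.
Qed.
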